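(* Let $N\ge3$ and let $l_0$ be the trajectory of system (S2) on the unstable manifold of $Q_1=(0,0,0)$ contained in the plane $\{z=0\}$ with $x>0$ (leaving $Q_1$ tangent to $(N,-1,0)$). Writing $(X,Y,Z)=(1/x,\,y/x,\,z/x)$ along it, and with $p_F(\sigma)=m+\frac{\sigma+2}{N}$: (a) If $m<p<p_F(\sigma)$, then along $l_0$, $Y\to-\infty$ and $X/Y\to0$ (and $Z\equiv0$), i.e. $l_0$ connects to the critical point at infinity $Q_5$. (b) If $p=p_F(\sigma)$, then $l_0$ is exactly the half-line $\{y=-x/N,\ z=0,\ x>0\}$ and it connects to $P_2$, i.e. $(X,Y,Z)\to\left(0,-\frac{p-m}{\sigma+2},0\right)$. (c) If $p>p_F(\sigma)$, then $l_0$ connects to $P_1$, i.e. $(X,Y,Z)\to(0,0,0)$.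
   Context: Let $m>1$, $\sigma>0$, $p>m$. System (S2) is $$\dot x=x(2-(m-1)y),\quad \dot y=-x-(N-2)y+z-my^2-\tfrac{p-m}{\sigma+2}xy,\quad \dot z=z(\sigma+2+(p-m)y),$$ and under $X=1/x$, $Y=y/x$, $Z=z/x$ (with a time change) it is equivalent to system (S1): $$\dot X=X[(m-1)Y-2X],\quad \dot Y=-Y^2-\tfrac{p-m}{\sigma+2}Y-X-NXY+XZ,\quad \dot Z=Z[(p-1)Y+\sigma X].$$ Limits are taken as the trajectory's parameter tends to $+\infty$. *)

(* Defs.v *)
From Stdlib Require Import Reals.
From Coquelicot Require Import Coquelicot.
Open Scope R_scope.

Definition S2_f (m : R) : R -> R -> R := fun x y => x * (2 - (m - 1) * y).
Definition S2_g (N m sigma p : R) : R -> R -> R -> R :=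
  fun x y z => - x - (N - 2) * y + z - m * y ^ 2 - (p - m) / (sigma + 2) * x * y.
Definition S2_h (m sigma p : R) : R -> R -> R :=
  fun y z => z * (sigma + 2 + (p - m) * y).

Definition S2_sol (N m sigma p : R) (T : Rbar) (x y z : R -> R) : Prop :=
  forall t : R, Rbar_lt t T ->
    is_derive x t (S2_f m (x t) (y t)) /\
    is_derive y t (S2_g N m sigma p (x t) (y t) (z t)) /\
    is_derive z t (S2_h m sigma p (y t) (z t)).

Definition S2_maximal (N m sigma p : R) (T : Rbar) (x y z : R -> R) : Prop :=
  forall (T' : Rbar) (x' y' z' : R -> R),
    Rbar_lt T T' -> S2_sol N m sigma p T' x' y' z' ->
    ~ (forall t : R, Rbar_lt t T -> x' t = x t /\ y' t = y t /\ z' t = z t).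

Definition end_filter (T : Rbar) : (R -> Prop) -> Prop :=
  match T with
  | Finite a => at_left a
  | _ => Rbar_locally T
  end.

Definition pF (N m sigma : R) : R := m + (sigma + 2) / N.

Definition X1 (x : R -> R) : R -> R := fun t => / x t.
Definition Y1 (x y : R -> R) : R -> R := fun t => y t / x t.
Definition Z1 (x z : R -> R) : R -> R := fun t => z t / x t.

(* Main.v *)
Require Import Defs.
From Stdlib Require Import Reals Lra Lia Classical.
From Coquelicot Require Import Coquelicot.
Open Scope R_scope.

Lemma mvt_gen (f f' : R -> R) a b : a < b ->
  (forall t, a <= t <= b -> is_derive f t (f' t)) ->
  exists c, f b - f a = f' c * (b - a) /\ a < c < b.
Proof.
  intros Hab Hd. apply MVT_cor2; auto.
  intros c Hc. apply is_derive_Reals. auto.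
Qed.

Lemma incr_strict (f f' : R -> R) a b : a < b ->
  (forall t, a <= t <= b -> is_derive f t (f' t)) ->
  (forall t, a < t < b -> 0 < f' t) -> f a < f b.
Proof.
  intros Hab Hd Hp. destruct (mvt_gen f f' a b Hab Hd) as [c [Hc1 Hc2]].
  specialize (Hp c Hc2). assert (0 < f' c * (b - a)) by (apply Rmult_lt_0_compat; lra). lra.
Qed.

Lemma incr_weak (f f' : R -> R) a b : a <= b ->
  (forall t, a <= t <= b -> is_derive f t (f' t)) ->
  (forall t, a < t < b -> 0 <= f' t) -> f a <= f b.
Proof.
  intros Hab Hd Hp. destruct (Rle_lt_or_eq_dec a b Hab) as [H|H]; [|subst; lra].
  destruct (mvt_gen f f' a b H Hd) as [c [Hc1 Hc2]].
  specialize (Hp c Hc2). assert (0 <= f' c * (b - a)) by (apply Rmult_le_pos; lra). lra.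
Qed.

Lemma decr_weak (f f' : R -> R) a b : a <= b ->
  (forall t, a <= t <= b -> is_derive f t (f' t)) ->
  (forall t, a < t < b -> f' t <= 0) -> f b <= f a.
Proof.
  intros Hab Hd Hp.
  assert (H := incr_weak (fun t => - f t) (fun t => - f' t) a b Hab).
  assert (- f a <= - f b); [|lra]. apply H.
  - intros t Ht. apply (is_derive_opp f t (f' t)). auto.
  - intros t Ht. specialize (Hp t Ht). lra.
Qed.

Lemma decr_strict (f f' : R -> R) a b : a < b ->
  (forall t, a <= t <= b -> is_derive f t (f' t)) ->
  (forall t, a < t < b -> f' t < 0) -> f b < f a.
Proof.
  intros Hab Hd Hp.
  assert (H := incr_strict (fun t => - f t) (fun t => - f' t) a b Hab).
  assert (- f a < - f b); [|lra]. apply H.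
  - intros t Ht. apply (is_derive_opp f t (f' t)). auto.
  - intros t Ht. specialize (Hp t Ht). lra.
Qed.

Lemma const_deriv (f f' : R -> R) a b : a <= b ->
  (forall t, a <= t <= b -> is_derive f t (f' t)) ->
  (forall t, a < t < b -> f' t = 0) -> f b = f a.
Proof.
  intros Hab Hd Hp. apply Rle_antisym.
  - apply (decr_weak f f'); auto. intros t Ht; rewrite Hp; lra.
  - apply (incr_weak f f'); auto. intros t Ht; rewrite Hp; lra.
Qed.

Lemma is_derive_eq (f : R -> R) (t l l' : R) : is_derive f t l -> l = l' -> is_derive f t l'.
Proof. intros H ->; exact H. Qed.

Ltac solve_exd := repeat split; try (eexists; eassumption); try assumption; try lra.

Lemma cplus (u0 : R) (F : R -> R) t l : is_derive F t l -> is_derive (fun s => u0 + F s) t l.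
Proof. intro H.
  assert (H2 := is_derive_plus (fun _ => u0) F t 0 l (is_derive_const u0 t) H).
  replace l with (plus 0 l). exact H2. unfold plus; simpl. ring. Qed.

Ltac rw_der H := match type of H with is_derive ?f ?t ?l =>
  replace (Derive (fun x0 : R => f x0) t) with l by (symmetry; apply is_derive_unique; exact H) end.

Lemma lip_cont_loc (a : R -> R) K c r t : 0 <= K ->
  (forall t s, Rabs (t - c) <= r -> Rabs (s - c) <= r -> Rabs (a t - a s) <= K * Rabs (t - s)) ->
  Rabs (t - c) < r -> continuous a t.
Proof.
  intros HK Hl Ht. apply continuity_pt_filterlim.
  intros eps Heps.
  exists (Rmin (eps / (K + 1)) (r - Rabs (t - c))). split.
  { apply Rmin_pos; [apply Rdiv_lt_0_compat; lra | lra]. }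
  intros s [_ Hs]. simpl in *. unfold R_dist in *.
  assert (H1 : Rabs (s - t) < eps / (K+1)) by (eapply Rlt_le_trans; [exact Hs| apply Rmin_l]).
  assert (H2 : Rabs (s - t) < r - Rabs (t - c)) by (eapply Rlt_le_trans; [exact Hs| apply Rmin_r]).
  assert (Hsc : Rabs (s - c) <= r).
  { replace (s - c) with ((s - t) + (t - c)) by ring.
    eapply Rle_trans; [apply Rabs_triang|]. lra. }
  specialize (Hl s t Hsc (Rlt_le _ _ Ht)).
  eapply Rle_lt_trans; [exact Hl|].
  assert (K * Rabs (s - t) <= K * (eps / (K+1))) by (apply Rmult_le_compat_l; lra).
  assert (K * (eps / (K+1)) < eps).
  { unfold Rdiv. replace (K * (eps * / (K+1))) with (eps * (K / (K+1))) by (field; lra).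
    assert (K / (K+1) < 1).
    { apply (Rmult_lt_reg_r (K+1)); [lra|]. unfold Rdiv. rewrite Rmult_assoc, Rinv_l; lra. }
    nra. }
  lra.
Qed.

Lemma lip_cont (a : R -> R) K t : 0 <= K ->
  (forall t s, Rabs (a t - a s) <= K * Rabs (t - s)) -> continuous a t.
Proof.
  intros HK Hl. apply (lip_cont_loc a K t 1 t HK); auto.
  rewrite Rminus_diag, Rabs_R0; lra.
Qed.

Lemma cont_comp2 (f : R -> R -> R) L (a c : R -> R) t : 0 <= L ->
  (forall a c a' c', Rabs (f a c - f a' c') <= L * (Rabs (a - a') + Rabs (c - c'))) ->
  continuous a t -> continuous c t -> continuous (fun s => f (a s) (c s)) t.
Proof.
  intros HL Hf Ha Hc.
  apply continuity_pt_filterlim in Ha. apply continuity_pt_filterlim in Hc.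
  apply continuity_pt_filterlim. intros eps Heps.
  set (e := eps / (2 * (L + 1))).
  assert (He : 0 < e) by (apply Rdiv_lt_0_compat; lra).
  destruct (Ha e He) as [d1 [Hd1 H1]]. destruct (Hc e He) as [d2 [Hd2 H2]].
  exists (Rmin d1 d2). split; [apply Rmin_pos; lra|].
  intros s [Hs0 Hs]. simpl in *. unfold R_dist in *.
  assert (A1 : Rabs (a s - a t) < e) by (apply H1; split; auto; eapply Rlt_le_trans; [exact Hs|apply Rmin_l]).
  assert (A2 : Rabs (c s - c t) < e) by (apply H2; split; auto; eapply Rlt_le_trans; [exact Hs|apply Rmin_r]).
  eapply Rle_lt_trans; [apply Hf|].
  assert (L * (Rabs (a s - a t) + Rabs (c s - c t)) <= L * (2 * e)) by (apply Rmult_le_compat_l; lra).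
  assert (L * (2*e) < eps).
  { unfold e. replace (L * (2 * (eps / (2 * (L + 1))))) with (eps * (L / (L+1))) by (field; lra).
    assert (L / (L+1) < 1).
    { apply (Rmult_lt_reg_r (L+1)); [lra|]. unfold Rdiv. rewrite Rmult_assoc, Rinv_l; lra. }
    nra. }
  lra.
Qed.

Lemma rint_bound (F : R -> R) a b K : ex_RInt F a b ->
  (forall s, Rmin a b <= s <= Rmax a b -> Rabs (F s) <= K) ->
  Rabs (RInt F a b) <= K * Rabs (b - a).
Proof.
  intros Hex Hb. destruct (Rle_or_lt a b) as [Hab|Hab].
  - rewrite (Rabs_right (b - a)) by lra. rewrite Rmult_comm. apply abs_RInt_le_const; auto.
    intros t Ht. apply Hb. rewrite Rmin_left, Rmax_right; lra.
  - rewrite <- (opp_RInt_swap F b a) by (apply ex_RInt_swap; auto).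
    rewrite (Rabs_left (b - a)) by lra.
    change (opp (RInt F b a)) with (- (RInt F b a)). rewrite Rabs_Ropp.
    replace (- (b - a)) with (a - b) by ring. rewrite Rmult_comm.
    apply abs_RInt_le_const; [lra| apply ex_RInt_swap; auto|].
    intros t Ht. apply Hb. rewrite Rmin_right, Rmax_left; lra.
Qed.

Lemma lim_abs_le (a b : nat -> R) (la lb : R) K : is_lim_seq a la -> is_lim_seq b lb ->
  (forall n, Rabs (a n - b n) <= K) -> Rabs (la - lb) <= K.
Proof.
  intros Ha Hb H.
  assert (Hl := is_lim_seq_abs _ _ (is_lim_seq_minus' _ _ _ _ Ha Hb)).
  assert (Hle := is_lim_seq_le _ _ _ _ H Hl (is_lim_seq_const K)). simpl in Hle. exact Hle.
Qed.

Lemma geom_small (C : R) eps : 0 < eps -> 0 <= C -> exists N, forall n, (N <= n)%nat -> C * (1/2)^n < eps.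
Proof.
  intros He HC. destruct (pow_lt_1_zero (1/2)) with (y := eps / (C + 1)) as [N HN].
  { rewrite Rabs_right; lra. } { apply Rdiv_lt_0_compat; lra. }
  exists N. intros n Hn. specialize (HN n Hn).
  rewrite Rabs_right in HN by (apply Rle_ge, pow_le; lra).
  assert (0 <= (1/2)^n) by (apply pow_le; lra).
  assert (C * (1/2)^n <= (C+1) * (1/2)^n) by nra.
  assert ((C+1) * (1/2)^n < (C+1) * (eps / (C+1))) by (apply Rmult_lt_compat_l; lra).
  replace ((C+1) * (eps / (C+1))) with eps in * by (field; lra). lra.
Qed.

Lemma zero_of_geom (a C : R) : 0 <= C -> (forall n, Rabs a <= C * (1/2)^n) -> a = 0.
Proof.
  intros HC H. destruct (Req_dec a 0) as [|Hne]; auto.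
  assert (Hp : 0 < Rabs a) by (apply Rabs_pos_lt; auto).
  destruct (geom_small C (Rabs a) Hp HC) as [N HN]. specialize (HN N (le_n N)).
  specialize (H N). lra.
Qed.

Lemma aux1 (a b : R) : a + b - a = b. Proof. ring. Qed.
Lemma aux2 (a b c : R) : a + b - (a + c) = b - c. Proof. ring. Qed.
Lemma aux3 (l u i j : R) : l - (u + i) = (l - (u + j)) - (i - j). Proof. ring. Qed.

Lemma Rabs_sub_le a b : Rabs (a - b) <= Rabs a + Rabs b.
Proof. unfold Rminus; eapply Rle_trans; [apply Rabs_triang|]; rewrite Rabs_Ropp; lra. Qed.

Section Picard.
Variables (f g : R -> R -> R) (B L h t0 u0 v0 : R).
Hypothesis Hh : 0 < h.
Hypothesis HB : 0 <= B.
Hypothesis HL : 0 <= L.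
Hypothesis HLh : L * h <= 1/4.
Hypothesis Hfb : forall a c, Rabs (f a c) <= B.
Hypothesis Hgb : forall a c, Rabs (g a c) <= B.
Hypothesis Hfl : forall a c a' c', Rabs (f a c - f a' c') <= L * (Rabs (a - a') + Rabs (c - c')).
Hypothesis Hgl : forall a c a' c', Rabs (g a c - g a' c') <= L * (Rabs (a - a') + Rabs (c - c')).

Fixpoint pic (n : nat) : (R -> R) * (R -> R) :=
  match n with
  | O => (fun _ => u0, fun _ => v0)
  | S n' => let p := pic n' in
      (fun t => u0 + RInt (fun s => f (fst p s) (snd p s)) t0 t,
       fun t => v0 + RInt (fun s => g (fst p s) (snd p s)) t0 t)
  end.

Definition pu n := fst (pic n).
Definition pv n := snd (pic n).

Definition Lip (a : R -> R) K := forall t s, Rabs (a t - a s) <= K * Rabs (t - s).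

Lemma step_lip (phi : R -> R -> R) w0 (a c : R -> R) K :
  0 <= K -> Lip a K -> Lip c K ->
  (forall a c, Rabs (phi a c) <= B) ->
  (forall a c a' c', Rabs (phi a c - phi a' c') <= L * (Rabs (a - a') + Rabs (c - c'))) ->
  Lip (fun t => w0 + RInt (fun s => phi (a s) (c s)) t0 t) B.
Proof.
  intros HK Ha Hc Hpb Hpl.
  assert (Hcont : forall s, continuous (fun s => phi (a s) (c s)) s).
  { intro s. apply (cont_comp2 phi L); auto; apply (lip_cont _ K); auto. }
  assert (Hex : forall x y, ex_RInt (fun s => phi (a s) (c s)) x y).
  { intros x y. apply (ex_RInt_continuous (V := R_CompleteNormedModule)). intros; auto. }
  intros t s.
  rewrite <- (RInt_Chasles _ t0 s t) by auto.
  change (plus ?x ?y) with (x + y).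
  assert (E : forall a b c : R, a + (b + c) - (a + b) = c) by (intros; ring). rewrite E.
  apply rint_bound; auto.
Qed.

Lemma pic_lip n : Lip (pu n) B /\ Lip (pv n) B.
Proof.
  induction n as [|n [IH1 IH2]].
  - split; intros t s; simpl; rewrite Rminus_diag, Rabs_R0; apply Rmult_le_pos; auto; apply Rabs_pos.
  - split; unfold pu, pv; simpl.
    + apply (step_lip f u0 _ _ B); auto.
    + apply (step_lip g v0 _ _ B); auto.
Qed.

Lemma pic_cont n t : continuous (fun s => f (pu n s) (pv n s)) t /\ continuous (fun s => g (pu n s) (pv n s)) t.
Proof.
  destruct (pic_lip n) as [H1 H2].
  split; apply (cont_comp2 _ L); auto; apply (lip_cont _ B); auto.
Qed.

Lemma pic_ex n x y : ex_RInt (fun s => f (pu n s) (pv n s)) x y /\ ex_RInt (fun s => g (pu n s) (pv n s)) x y.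
Proof.
  split; apply (ex_RInt_continuous (V := R_CompleteNormedModule)); intros; apply pic_cont.
Qed.

Lemma pic_S_u n t : pu (S n) t = u0 + RInt (fun s => f (pu n s) (pv n s)) t0 t.
Proof. reflexivity. Qed.
Lemma pic_S_v n t : pv (S n) t = v0 + RInt (fun s => g (pu n s) (pv n s)) t0 t.
Proof. reflexivity. Qed.

Lemma seg_in t s : Rabs (t - t0) <= h -> Rmin t0 t <= s <= Rmax t0 t -> Rabs (s - t0) <= Rabs (t - t0).
Proof.
  intros Ht Hs. unfold Rmin, Rmax in Hs. destruct (Rle_dec t0 t); unfold Rabs;
  repeat destruct Rcase_abs; lra.
Qed.

Lemma diff_step (phi : R -> R -> R) (a1 c1 a0 c0 : R -> R) t d :
  (forall a c a' c', Rabs (phi a c - phi a' c') <= L * (Rabs (a - a') + Rabs (c - c'))) ->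
  ex_RInt (fun s => phi (a1 s) (c1 s)) t0 t -> ex_RInt (fun s => phi (a0 s) (c0 s)) t0 t ->
  (forall s, Rmin t0 t <= s <= Rmax t0 t -> Rabs (a1 s - a0 s) + Rabs (c1 s - c0 s) <= d) ->
  Rabs (RInt (fun s => phi (a1 s) (c1 s)) t0 t - RInt (fun s => phi (a0 s) (c0 s)) t0 t) <= L * d * Rabs (t - t0).
Proof.
  intros Hpl H1 H0 Hd.
  assert (E := RInt_minus _ _ _ _ H1 H0). change (minus ?x ?y) with (x - y) in E.
  rewrite <- E. apply rint_bound.
  - apply (ex_RInt_minus (V := R_NormedModule)); auto.
  - intros s Hs. eapply Rle_trans; [apply Hpl|]. apply Rmult_le_compat_l; auto.
Qed.

Lemma pic_diff n t : Rabs (t - t0) <= h ->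
  Rabs (pu (S n) t - pu n t) + Rabs (pv (S n) t - pv n t) <= 2 * B * h * (1/2)^n.
Proof.
  revert t. induction n as [|n IH]; intros t Ht.
  - rewrite !pic_S_u, !pic_S_v. unfold pu, pv; simpl.
    rewrite !aux1.
    assert (A1 : Rabs (RInt (fun _ : R => f u0 v0) t0 t) <= B * Rabs (t - t0)).
    { apply rint_bound; auto. apply ex_RInt_const. }
    assert (A2 : Rabs (RInt (fun _ : R => g u0 v0) t0 t) <= B * Rabs (t - t0)).
    { apply rint_bound; auto. apply ex_RInt_const. }
    assert (B * Rabs (t - t0) <= B * h) by (apply Rmult_le_compat_l; auto). lra.
  - rewrite (pic_S_u (S n)), (pic_S_v (S n)), (pic_S_u n), (pic_S_v n).
    destruct (pic_ex (S n) t0 t) as [E1 E2]. destruct (pic_ex n t0 t) as [E3 E4].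
    assert (Hd : forall s, Rmin t0 t <= s <= Rmax t0 t ->
       Rabs (pu (S n) s - pu n s) + Rabs (pv (S n) s - pv n s) <= 2 * B * h * (1/2)^n).
    { intros s Hs. apply IH. eapply Rle_trans; [apply (seg_in t s)|]; auto. }
    assert (D1 := diff_step f _ _ _ _ t _ Hfl E1 E3 Hd).
    assert (D2 := diff_step g _ _ _ _ t _ Hgl E2 E4 Hd).
    rewrite !aux2.
    assert (Hq : 0 <= 2 * B * h * (1/2)^n) by (apply Rmult_le_pos; [nra| apply pow_le; lra]).
    assert (L * (2 * B * h * (1/2)^n) * Rabs (t - t0) <= L * (2 * B * h * (1/2)^n) * h).
    { apply Rmult_le_compat_l; auto. apply Rmult_le_pos; auto. }
    simpl. nra.
Qed.

Lemma pic_cauchy n k t : Rabs (t - t0) <= h ->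
  Rabs (pu (n + k) t - pu n t) <= 4 * B * h * ((1/2)^n - (1/2)^(n+k)) /\
  Rabs (pv (n + k) t - pv n t) <= 4 * B * h * ((1/2)^n - (1/2)^(n+k)).
Proof.
  intros Ht. induction k as [|k [IH1 IH2]].
  - rewrite Nat.add_0_r, !Rminus_diag, Rabs_R0. lra.
  - rewrite Nat.add_succ_r. assert (Hd := pic_diff (n + k) t Ht).
    assert (P1 := Rabs_pos (pu (S (n + k)) t - pu (n + k) t)).
    assert (P2 := Rabs_pos (pv (S (n + k)) t - pv (n + k) t)).
    simpl ((1/2)^(S (n+k))).
    split.
    + replace (pu (S (n + k)) t - pu n t) with ((pu (S (n + k)) t - pu (n+k) t) + (pu (n + k) t - pu n t)) by ring.
      eapply Rle_trans; [apply Rabs_triang|]. nra.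
    + replace (pv (S (n + k)) t - pv n t) with ((pv (S (n + k)) t - pv (n+k) t) + (pv (n + k) t - pv n t)) by ring.
      eapply Rle_trans; [apply Rabs_triang|]. nra.
Qed.

Lemma pic_cauchy' n m t : (n <= m)%nat -> Rabs (t - t0) <= h ->
  Rabs (pu m t - pu n t) <= 4 * B * h * (1/2)^n /\ Rabs (pv m t - pv n t) <= 4 * B * h * (1/2)^n.
Proof.
  intros Hnm Ht. replace m with (n + (m - n))%nat by lia.
  destruct (pic_cauchy n (m - n) t Ht) as [H1 H2].
  assert (0 <= (1/2)^(n + (m-n))) by (apply pow_le; lra).
  assert (0 <= B * h) by nra. split; nra.
Qed.

Definition lu t : R := real (Lim_seq (fun n => pu n t)).
Definition lv t : R := real (Lim_seq (fun n => pv n t)).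

Lemma cauchy_geom (a : nat -> R) C : 0 <= C ->
  (forall n m, (n <= m)%nat -> Rabs (a m - a n) <= C * (1/2)^n) -> is_lim_seq a (real (Lim_seq a)).
Proof.
  intros HC H. cut (ex_finite_lim_seq a).
  { intros [l Hl]. rewrite (is_lim_seq_unique _ _ Hl). exact Hl. }
  apply ex_lim_seq_cauchy_corr.
  intros eps. destruct (geom_small C eps (cond_pos eps) HC) as [N HN].
  exists N. intros n m Hn Hm. destruct (Nat.le_ge_cases n m) as [Hnm|Hnm].
  - rewrite Rabs_minus_sym. eapply Rle_lt_trans; [apply H; auto|]. apply HN; auto.
  - eapply Rle_lt_trans; [apply H; auto|]. apply HN; auto.
Qed.

Lemma lim_u t : Rabs (t - t0) <= h -> is_lim_seq (fun n => pu n t) (lu t).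
Proof.
  intro Ht. apply (cauchy_geom _ (4 * B * h)); [nra|]. intros n m Hnm. apply pic_cauchy'; auto.
Qed.
Lemma lim_v t : Rabs (t - t0) <= h -> is_lim_seq (fun n => pv n t) (lv t).
Proof.
  intro Ht. apply (cauchy_geom _ (4 * B * h)); [nra|]. intros n m Hnm. apply pic_cauchy'; auto.
Qed.

Lemma tail_u n t : Rabs (t - t0) <= h -> Rabs (lu t - pu n t) <= 4 * B * h * (1/2)^n /\ Rabs (lv t - pv n t) <= 4 * B * h * (1/2)^n.
Proof.
  intro Ht. split.
  - apply (lim_abs_le (fun m => pu (m + n) t) (fun _ => pu n t)).
    + apply (is_lim_seq_incr_n (fun m => pu m t) n). apply lim_u; auto.
    + apply is_lim_seq_const.
    + intro m. apply pic_cauchy'; auto. lia.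
  - apply (lim_abs_le (fun m => pv (m + n) t) (fun _ => pv n t)).
    + apply (is_lim_seq_incr_n (fun m => pv m t) n). apply lim_v; auto.
    + apply is_lim_seq_const.
    + intro m. apply pic_cauchy'; auto. lia.
Qed.

Lemma lim_lip t s : Rabs (t - t0) <= h -> Rabs (s - t0) <= h ->
  Rabs (lu t - lu s) <= B * Rabs (t - s) /\ Rabs (lv t - lv s) <= B * Rabs (t - s).
Proof.
  intros Ht Hs. split.
  - apply (lim_abs_le (fun n => pu n t) (fun n => pu n s)); try apply lim_u; try apply lim_v; auto.
    intro n. apply pic_lip.
  - apply (lim_abs_le (fun n => pv n t) (fun n => pv n s)); try apply lim_u; try apply lim_v; auto.
    intro n. apply pic_lip.
Qed.

Lemma pic_t0 n : pu n t0 = u0 /\ pv n t0 = v0.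
Proof.
  destruct n; unfold pu, pv; simpl; auto. rewrite !RInt_point. change zero with 0. split; ring.
Qed.

Lemma lim_t0 : lu t0 = u0 /\ lv t0 = v0.
Proof.
  unfold lu, lv. split.
  - rewrite (Lim_seq_ext _ (fun _ => u0)); [rewrite Lim_seq_const; reflexivity| intro n; apply pic_t0].
  - rewrite (Lim_seq_ext _ (fun _ => v0)); [rewrite Lim_seq_const; reflexivity| intro n; apply pic_t0].
Qed.

Lemma lim_cont t : Rabs (t - t0) < h ->
  continuous (fun s => f (lu s) (lv s)) t /\ continuous (fun s => g (lu s) (lv s)) t.
Proof.
  intro Ht.
  assert (C1 : continuous lu t) by (apply (lip_cont_loc lu B t0 h); auto; intros; apply lim_lip; auto).
  assert (C2 : continuous lv t) by (apply (lip_cont_loc lv B t0 h); auto; intros; apply lim_lip; auto).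
  split; apply (cont_comp2 _ L); auto.
Qed.

Lemma lim_ex t : Rabs (t - t0) < h ->
  ex_RInt (fun s => f (lu s) (lv s)) t0 t /\ ex_RInt (fun s => g (lu s) (lv s)) t0 t.
Proof.
  intro Ht.
  assert (Hs' : forall s, Rmin t0 t <= s <= Rmax t0 t -> Rabs (s - t0) < h).
  { intros s Hs. eapply Rle_lt_trans; [apply (seg_in t s)|]; auto; lra. }
  split; apply (ex_RInt_continuous (V := R_CompleteNormedModule)); intros s Hs; apply lim_cont; auto.
Qed.

Lemma lim_fix t : Rabs (t - t0) < h ->
  lu t = u0 + RInt (fun s => f (lu s) (lv s)) t0 t /\ lv t = v0 + RInt (fun s => g (lu s) (lv s)) t0 t.
Proof.
  intro Ht. destruct (lim_ex t Ht) as [E1 E2].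
  assert (Hd : forall n s, Rmin t0 t <= s <= Rmax t0 t ->
     Rabs (lu s - pu n s) + Rabs (lv s - pv n s) <= 8 * B * h * (1/2)^n).
  { intros n s Hs. assert (Rabs (s - t0) <= h).
    { eapply Rle_trans; [apply (seg_in t s)|]; auto; lra. }
    destruct (tail_u n s H). lra. }
  assert (Hq : forall n, 0 <= (1/2)^n) by (intro; apply pow_le; lra).
  split.
  - apply Rminus_diag_uniq. apply (zero_of_geom _ (4 * B * h + L * (8 * B * h) * h)).
    { assert (0 <= B * h) by nra. assert (0 <= L * (8 * B * h) * h) by (apply Rmult_le_pos; nra). lra. }
    intro n. destruct (pic_ex n t0 t) as [E3 _].
    assert (D1 := diff_step f _ _ _ _ t _ Hfl E1 E3 (Hd n)).
    destruct (tail_u (S n) t (Rlt_le _ _ Ht)) as [T1 _].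
    rewrite pic_S_u in T1. simpl ((1/2)^(S n)) in T1.
    rewrite (aux3 _ _ _ (RInt (fun s : R => f (pu n s) (pv n s)) t0 t)).
    eapply Rle_trans; [apply Rabs_sub_le|].
    assert (L * (8 * B * h * (1/2)^n) * Rabs (t - t0) <= L * (8 * B * h) * h * (1/2)^n).
    { replace (L * (8 * B * h) * h * (1/2)^n) with (L * (8 * B * h * (1/2)^n) * h) by ring.
      apply Rmult_le_compat_l; [|lra]. apply Rmult_le_pos; auto. apply Rmult_le_pos; [|apply Hq]. assert (0 <= B * h) by nra. lra. }
    specialize (Hq n). assert (0 <= B * h) by nra. nra.
  - apply Rminus_diag_uniq. apply (zero_of_geom _ (4 * B * h + L * (8 * B * h) * h)).
    { assert (0 <= B * h) by nra. assert (0 <= L * (8 * B * h) * h) by (apply Rmult_le_pos; nra). lra. }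
    intro n. destruct (pic_ex n t0 t) as [_ E3].
    assert (D1 := diff_step g _ _ _ _ t _ Hgl E2 E3 (Hd n)).
    destruct (tail_u (S n) t (Rlt_le _ _ Ht)) as [_ T1].
    rewrite pic_S_v in T1. simpl ((1/2)^(S n)) in T1.
    rewrite (aux3 _ _ _ (RInt (fun s : R => g (pu n s) (pv n s)) t0 t)).
    eapply Rle_trans; [apply Rabs_sub_le|].
    assert (L * (8 * B * h * (1/2)^n) * Rabs (t - t0) <= L * (8 * B * h) * h * (1/2)^n).
    { replace (L * (8 * B * h) * h * (1/2)^n) with (L * (8 * B * h * (1/2)^n) * h) by ring.
      apply Rmult_le_compat_l; [|lra]. apply Rmult_le_pos; auto. apply Rmult_le_pos; [|apply Hq]. assert (0 <= B * h) by nra. lra. }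
    specialize (Hq n). assert (0 <= B * h) by nra. nra.
Qed.

Lemma lim_deriv t : Rabs (t - t0) < h ->
  is_derive lu t (f (lu t) (lv t)) /\ is_derive lv t (g (lu t) (lv t)).
Proof.
  intro Ht. set (r := mkposreal (h - Rabs (t - t0)) ltac:(lra)).
  assert (Hin : forall s, Rabs (s - t) < r -> Rabs (s - t0) < h).
  { intros s Hs. simpl in Hs. replace (s - t0) with ((s - t) + (t - t0)) by ring.
    eapply Rle_lt_trans; [apply Rabs_triang|]. lra. }
  destruct (lim_cont t Ht) as [C1 C2].
  split.
  - apply (is_derive_ext_loc (fun s => u0 + RInt (fun s => f (lu s) (lv s)) t0 s)).
    { exists r. intros s Hs. symmetry. apply lim_fix. apply Hin. exact Hs. }
    apply cplus.
    assert (Hloc : locally t (fun b => is_RInt (fun s => f (lu s) (lv s)) t0 b (RInt (fun s => f (lu s) (lv s)) t0 b))).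
    { exists r. intros s Hs. apply (RInt_correct (V := R_CompleteNormedModule)). apply lim_ex. apply Hin. exact Hs. }
    exact (is_derive_RInt (V := R_CompleteNormedModule) _ _ t0 t Hloc C1).
  - apply (is_derive_ext_loc (fun s => v0 + RInt (fun s => g (lu s) (lv s)) t0 s)).
    { exists r. intros s Hs. symmetry. apply lim_fix. apply Hin. exact Hs. }
    apply cplus.
    assert (Hloc : locally t (fun b => is_RInt (fun s => g (lu s) (lv s)) t0 b (RInt (fun s => g (lu s) (lv s)) t0 b))).
    { exists r. intros s Hs. apply (RInt_correct (V := R_CompleteNormedModule)). apply lim_ex. apply Hin. exact Hs. }
    exact (is_derive_RInt (V := R_CompleteNormedModule) _ _ t0 t Hloc C2).
Qed.

End Picard.

Lemma picard (f g : R -> R -> R) (B L h t0 u0 v0 : R) :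
  0 < h -> 0 <= B -> 0 <= L -> L * h <= 1/4 ->
  (forall a c, Rabs (f a c) <= B) -> (forall a c, Rabs (g a c) <= B) ->
  (forall a c a' c', Rabs (f a c - f a' c') <= L * (Rabs (a - a') + Rabs (c - c'))) ->
  (forall a c a' c', Rabs (g a c - g a' c') <= L * (Rabs (a - a') + Rabs (c - c'))) ->
  exists u v : R -> R,
    (forall t, Rabs (t - t0) < h -> is_derive u t (f (u t) (v t)) /\ is_derive v t (g (u t) (v t))) /\
    (forall t, Rabs (t - t0) <= h -> Rabs (u t - u0) <= B * Rabs (t - t0) /\ Rabs (v t - v0) <= B * Rabs (t - t0)).
Proof.
  intros. exists (lu f g t0 u0 v0), (lv f g t0 u0 v0). split.
  - intros t1 Ht1. apply (lim_deriv f g B L h t0 u0 v0 H H0 H1 H2 H3 H4 H5 H6); auto.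
  - intros t1 Ht1. destruct (lim_t0 f g t0 u0 v0) as [E1 E2].
    assert (Ht0 : Rabs (t0 - t0) <= h) by (rewrite Rminus_diag, Rabs_R0; lra).
    destruct (lim_lip f g B L h t0 u0 v0 H H0 H1 H2 H3 H4 H5 H6 t1 t0 Ht1 Ht0) as [A1 A2].
    rewrite E1 in A1. rewrite E2 in A2. auto.
Qed.

Lemma abs_mul_le x y A C : Rabs x <= A -> Rabs y <= C -> Rabs (x*y) <= A*C.
Proof. intros. rewrite Rabs_mult. apply Rmult_le_compat; auto; apply Rabs_pos. Qed.

Definition cl (R0 a : R) := Rmax (- R0) (Rmin R0 a).

Lemma cl_bound R0 a : 0 <= R0 -> Rabs (cl R0 a) <= R0.
Proof. intro. unfold cl, Rmax, Rmin. repeat destruct Rle_dec; unfold Rabs; destruct Rcase_abs; lra. Qed.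
Lemma cl_lip R0 a a' : 0 <= R0 -> Rabs (cl R0 a - cl R0 a') <= Rabs (a - a').
Proof. intro. unfold cl, Rmax, Rmin. repeat destruct Rle_dec; unfold Rabs; repeat destruct Rcase_abs; lra. Qed.
Lemma cl_id R0 a : Rabs a <= R0 -> cl R0 a = a.
Proof. intro H. unfold cl, Rmax, Rmin. unfold Rabs in H; destruct Rcase_abs in H; repeat destruct Rle_dec; lra. Qed.

Section Field.
Variables (N m sigma p R0 : R).
Hypothesis HR : 0 <= R0.
Let k := (p - m) / (sigma + 2).
Definition Kc := 3 + Rabs (N - 2) + (Rabs (m - 1) + 2 * Rabs m + Rabs ((p - m) / (sigma + 2))) * R0.

Lemma Kc_pos : 1 <= Kc.
Proof.
  unfold Kc. assert (0 <= (Rabs (m - 1) + 2 * Rabs m + Rabs ((p - m) / (sigma + 2))) * R0).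
  { apply Rmult_le_pos; auto. assert (H1 := Rabs_pos (m-1)). assert (H2 := Rabs_pos m).
    assert (H3 := Rabs_pos ((p - m) / (sigma + 2))). lra. }
  assert (H4 := Rabs_pos (N-2)). lra.
Qed.

Lemma F_bound a c : Rabs a <= R0 -> Rabs c <= R0 -> Rabs (S2_f m a c) <= Kc * R0.
Proof.
  intros Ha Hc. unfold S2_f.
  assert (Rabs (2 - (m - 1) * c) <= 2 + Rabs (m - 1) * R0).
  { eapply Rle_trans; [apply Rabs_sub_le|]. rewrite (Rabs_right 2) by lra.
    assert (Rabs ((m - 1) * c) <= Rabs (m-1) * R0) by (apply abs_mul_le; lra). lra. }
  eapply Rle_trans; [apply abs_mul_le; eauto|]. rewrite Rmult_comm. apply Rmult_le_compat_r; auto.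
  unfold Kc. assert (H2 := Rabs_pos m). assert (H3 := Rabs_pos ((p - m) / (sigma + 2))).
  assert (H4 := Rabs_pos (N-2)). assert (0 <= (2 * Rabs m + Rabs ((p - m) / (sigma + 2))) * R0) by (apply Rmult_le_pos; lra).
  nra.
Qed.

Lemma G_bound a c : Rabs a <= R0 -> Rabs c <= R0 -> Rabs (S2_g N m sigma p a c 0) <= Kc * R0.
Proof.
  intros Ha Hc. unfold S2_g.
  assert (A1 : Rabs ((N - 2) * c) <= Rabs (N-2) * R0) by (apply abs_mul_le; lra).
  assert (A2 : Rabs (m * c ^ 2) <= Rabs m * (R0 * R0)).
  { apply abs_mul_le; [lra|]. simpl. rewrite Rmult_1_r. apply abs_mul_le; auto. }
  assert (A3 : Rabs ((p - m) / (sigma + 2) * a * c) <= Rabs ((p - m) / (sigma + 2)) * R0 * R0).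
  { apply abs_mul_le; auto. apply abs_mul_le; lra. }
  assert (E : - a - (N - 2) * c + 0 - m * c ^ 2 - (p - m) / (sigma + 2) * a * c =
     - a - (N - 2) * c - m * c ^ 2 - (p - m) / (sigma + 2) * a * c) by ring.
  rewrite E.
  eapply Rle_trans; [apply Rabs_sub_le|]. eapply Rle_trans; [apply Rplus_le_compat_r; apply Rabs_sub_le|].
  eapply Rle_trans; [apply Rplus_le_compat_r; apply Rplus_le_compat_r; apply Rabs_sub_le|].
  rewrite Rabs_Ropp.
  unfold Kc. assert (H1 := Rabs_pos (m-1)). assert (H2 := Rabs_pos m). assert (H3 := Rabs_pos ((p - m) / (sigma + 2))).
  assert (H4 := Rabs_pos (N-2)).
  assert (0 <= Rabs (m - 1) * R0 * R0) by (apply Rmult_le_pos; [apply Rmult_le_pos|]; lra).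
  nra.
Qed.

Lemma F_lip a c a' c' : Rabs a <= R0 -> Rabs c <= R0 -> Rabs a' <= R0 -> Rabs c' <= R0 ->
  Rabs (S2_f m a c - S2_f m a' c') <= Kc * (Rabs (a - a') + Rabs (c - c')).
Proof.
  intros Ha Hc Ha' Hc'. unfold S2_f.
  replace (a * (2 - (m - 1) * c) - a' * (2 - (m - 1) * c')) with
    (2 * (a - a') - (m - 1) * (a * (c - c') + c' * (a - a'))) by ring.
  eapply Rle_trans; [apply Rabs_sub_le|].
  assert (A1 : Rabs (2 * (a - a')) <= 2 * Rabs (a - a')) by (rewrite Rabs_mult, Rabs_right; lra).
  assert (A2 : Rabs (a * (c - c') + c' * (a - a')) <= R0 * Rabs (c - c') + R0 * Rabs (a - a')).
  { eapply Rle_trans; [apply Rabs_triang|]. apply Rplus_le_compat; apply abs_mul_le; lra. }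
  assert (A3 : Rabs ((m - 1) * (a * (c - c') + c' * (a - a'))) <= Rabs (m - 1) * (R0 * Rabs (c - c') + R0 * Rabs (a - a')))
    by (apply abs_mul_le; lra).
  unfold Kc. assert (H1 := Rabs_pos (m-1)). assert (H2 := Rabs_pos m). assert (H3 := Rabs_pos ((p - m) / (sigma + 2))).
  assert (H4 := Rabs_pos (N-2)). assert (H5 := Rabs_pos (a - a')). assert (H6 := Rabs_pos (c - c')).
  assert (0 <= (2 * Rabs m + Rabs ((p - m) / (sigma + 2))) * R0 * (Rabs (a - a') + Rabs (c - c'))).
  { apply Rmult_le_pos; [apply Rmult_le_pos|]; lra. }
  assert (0 <= Rabs (m-1) * R0) by (apply Rmult_le_pos; lra).
  nra.
Qed.

Lemma G_lip a c a' c' : Rabs a <= R0 -> Rabs c <= R0 -> Rabs a' <= R0 -> Rabs c' <= R0 ->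
  Rabs (S2_g N m sigma p a c 0 - S2_g N m sigma p a' c' 0) <= Kc * (Rabs (a - a') + Rabs (c - c')).
Proof.
  intros Ha Hc Ha' Hc'. unfold S2_g.
  set (kk := (p - m) / (sigma + 2)).
  replace (- a - (N - 2) * c + 0 - m * c ^ 2 - kk * a * c - (- a' - (N - 2) * c' + 0 - m * c' ^ 2 - kk * a' * c'))
    with (- (a - a') - (N - 2) * (c - c') - m * ((c + c') * (c - c')) - kk * (a * (c - c') + c' * (a - a'))) by ring.
  assert (A1 : Rabs ((N - 2) * (c - c')) <= Rabs (N-2) * Rabs (c - c')) by (apply abs_mul_le; lra).
  assert (Hcc : Rabs (c + c') <= 2 * R0) by (eapply Rle_trans; [apply Rabs_triang|]; lra).
  assert (A2 : Rabs (m * ((c + c') * (c - c'))) <= Rabs m * (2 * R0 * Rabs (c - c'))).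
  { apply abs_mul_le; [lra|]. apply abs_mul_le; lra. }
  assert (A3 : Rabs (a * (c - c') + c' * (a - a')) <= R0 * Rabs (c - c') + R0 * Rabs (a - a')).
  { eapply Rle_trans; [apply Rabs_triang|]. apply Rplus_le_compat; apply abs_mul_le; lra. }
  assert (A4 : Rabs (kk * (a * (c - c') + c' * (a - a'))) <= Rabs kk * (R0 * Rabs (c - c') + R0 * Rabs (a - a')))
    by (apply abs_mul_le; lra).
  eapply Rle_trans; [apply Rabs_sub_le|]. eapply Rle_trans; [apply Rplus_le_compat_r; apply Rabs_sub_le|].
  eapply Rle_trans; [apply Rplus_le_compat_r; apply Rplus_le_compat_r; apply Rabs_sub_le|].
  rewrite Rabs_Ropp.
  unfold Kc. fold kk. assert (H1 := Rabs_pos (m-1)). assert (H2 := Rabs_pos m). assert (H3 := Rabs_pos kk).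
  assert (H4 := Rabs_pos (N-2)). assert (H5 := Rabs_pos (a - a')). assert (H6 := Rabs_pos (c - c')).
  assert (0 <= Rabs (m-1) * R0 * (Rabs (a - a') + Rabs (c - c'))) by (apply Rmult_le_pos; [apply Rmult_le_pos|]; lra).
  assert (0 <= Rabs kk * R0 * Rabs (c - c')) by (apply Rmult_le_pos; [apply Rmult_le_pos|]; lra).
  assert (0 <= Rabs kk * R0 * Rabs (a - a')) by (apply Rmult_le_pos; [apply Rmult_le_pos|]; lra).
  assert (0 <= Rabs m * R0 * Rabs (c - c')) by (apply Rmult_le_pos; [apply Rmult_le_pos|]; lra).
  assert (0 <= Rabs m * R0 * Rabs (a - a')) by (apply Rmult_le_pos; [apply Rmult_le_pos|]; lra).
  nra.
Qed.

Definition Fc a c := S2_f m (cl R0 a) (cl R0 c).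
Definition Gc a c := S2_g N m sigma p (cl R0 a) (cl R0 c) 0.

Lemma Fc_bound a c : Rabs (Fc a c) <= Kc * R0.
Proof. apply F_bound; apply cl_bound; auto. Qed.
Lemma Gc_bound a c : Rabs (Gc a c) <= Kc * R0.
Proof. apply G_bound; apply cl_bound; auto. Qed.
Lemma Fc_lip a c a' c' : Rabs (Fc a c - Fc a' c') <= Kc * (Rabs (a - a') + Rabs (c - c')).
Proof.
  eapply Rle_trans; [apply F_lip; apply cl_bound; auto|].
  assert (H := Kc_pos). apply Rmult_le_compat_l; [lra|].
  apply Rplus_le_compat; apply cl_lip; auto.
Qed.
Lemma Gc_lip a c a' c' : Rabs (Gc a c - Gc a' c') <= Kc * (Rabs (a - a') + Rabs (c - c')).
Proof.
  eapply Rle_trans; [apply G_lip; apply cl_bound; auto|].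
  assert (H := Kc_pos). apply Rmult_le_compat_l; [lra|].
  apply Rplus_le_compat; apply cl_lip; auto.
Qed.
End Field.

Lemma gron_ineq a c d1 d2 K : 0 <= K -> Rabs d1 <= K * (Rabs a + Rabs c) -> Rabs d2 <= K * (Rabs a + Rabs c) ->
  2 * a * d1 + 2 * c * d2 <= 4 * K * (a^2 + c^2).
Proof.
  intros HK H1 H2.
  assert (E1 : a * d1 <= Rabs a * Rabs d1) by (rewrite <- Rabs_mult; apply Rle_abs).
  assert (E2 : c * d2 <= Rabs c * Rabs d2) by (rewrite <- Rabs_mult; apply Rle_abs).
  assert (P1 := Rabs_pos a). assert (P2 := Rabs_pos c).
  assert (F1 : Rabs a * Rabs d1 <= Rabs a * (K * (Rabs a + Rabs c))) by (apply Rmult_le_compat_l; auto).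
  assert (F2 : Rabs c * Rabs d2 <= Rabs c * (K * (Rabs a + Rabs c))) by (apply Rmult_le_compat_l; auto).
  rewrite <- (pow2_abs a), <- (pow2_abs c).
  assert (0 <= K * (Rabs a - Rabs c)^2) by (apply Rmult_le_pos; [lra| apply pow2_ge_0]).
  nra.
Qed.

Lemma gronwall2 (x y u v dx dy du dv : R -> R) K a s : 0 <= K -> a <= s ->
  (forall t, a <= t <= s -> is_derive x t (dx t) /\ is_derive y t (dy t) /\ is_derive u t (du t) /\ is_derive v t (dv t)) ->
  (forall t, a <= t <= s -> Rabs (dx t - du t) <= K * (Rabs (x t - u t) + Rabs (y t - v t)) /\
                            Rabs (dy t - dv t) <= K * (Rabs (x t - u t) + Rabs (y t - v t))) ->
  x a = u a -> y a = v a -> x s = u s /\ y s = v s.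
Proof.
  intros HK Has Hd Hb Hx Hy.
  set (phi := fun t => ((x t - u t)^2 + (y t - v t)^2) * exp (-(4*K) * t)).
  set (phi' := fun t => (2 * (x t - u t) * (dx t - du t) + 2 * (y t - v t) * (dy t - dv t)) * exp (-(4*K) * t)
        + ((x t - u t)^2 + (y t - v t)^2) * (-(4*K) * exp (-(4*K) * t))).
  assert (Hphi : phi s <= phi a).
  { apply (decr_weak phi phi'); auto.
    - intros t Ht. destruct (Hd t Ht) as [D1 [D2 [D3 D4]]]. unfold phi, phi'.
      auto_derive.
      + solve_exd.
      + rw_der D1; rw_der D2; rw_der D3; rw_der D4. ring.
    - intros t Ht. destruct (Hb t (conj (Rlt_le _ _ (proj1 Ht)) (Rlt_le _ _ (proj2 Ht)))) as [B1 B2].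
      unfold phi'. assert (He := exp_pos (-(4*K) * t)).
      assert (G := gron_ineq (x t - u t) (y t - v t) _ _ K HK B1 B2). nra. }
  unfold phi in Hphi. rewrite Hx, Hy, !Rminus_diag in Hphi.
  assert (He := exp_pos (-(4*K) * s)).
  assert (Q1 := pow2_ge_0 (x s - u s)). assert (Q2 := pow2_ge_0 (y s - v s)).
  assert (Z : (x s - u s)^2 + (y s - v s)^2 <= 0).
  { simpl in Hphi. nra. }
  simpl in Q1, Q2, Z. split; nra.
Qed.

Lemma no_bounded_end (N m sigma p b M t1 : R) (x y z : R -> R) :
  S2_sol N m sigma p (Finite b) x y z -> S2_maximal N m sigma p (Finite b) x y z ->
  (forall t, t < b -> z t = 0) -> t1 < b ->
  (forall t, t1 < t < b -> Rabs (x t) <= M /\ Rabs (y t) <= M) -> False.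
Proof.
  intros Hsol Hmax Hz Ht1 Hbd.
  set (R0 := Rabs M + 1).
  assert (HR0 : 1 <= R0) by (unfold R0; assert (H := Rabs_pos M); lra).
  set (K := Kc N m sigma p R0).
  assert (HK : 1 <= K) by (apply Kc_pos; lra).
  set (B := K * R0).
  assert (HB : 1 <= B) by (unfold B; nra).
  set (h := Rmin (b - t1) (Rmin (1 / (4 * K)) (1 / B))).
  assert (Hh1 : h <= b - t1) by apply Rmin_l.
  assert (Hh2 : h <= 1 / (4 * K)) by (eapply Rle_trans; [apply Rmin_r| apply Rmin_l]).
  assert (Hh3 : h <= 1 / B) by (eapply Rle_trans; [apply Rmin_r| apply Rmin_r]).
  assert (Hh : 0 < h).
  { unfold h. apply Rmin_pos; [lra| apply Rmin_pos; apply Rdiv_lt_0_compat; lra]. }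
  assert (HKh : K * h <= 1/4).
  { apply (Rmult_le_compat_l K) in Hh2; [|lra]. replace (K * (1 / (4 * K))) with (1/4) in Hh2 by (field; lra). lra. }
  assert (HBh : B * h <= 1).
  { apply (Rmult_le_compat_l B) in Hh3; [|lra]. replace (B * (1 / B)) with 1 in Hh3 by (field; lra). lra. }
  set (t0 := b - h / 2).
  assert (Ht0 : t1 < t0 < b) by (unfold t0; lra).
  destruct (Hbd t0 Ht0) as [Bx0 By0].
  destruct (picard (Fc m R0) (Gc N m sigma p R0) B K h t0 (x t0) (y t0)) as [u [v [Huv Hbuv]]]; try lra.
  { intros; apply Fc_bound; lra. } { intros; apply Gc_bound; lra. }
  { intros; apply Fc_lip; lra. } { intros; apply Gc_lip; lra. }
  assert (Hub : forall t, Rabs (t - t0) <= h -> Rabs (u t) <= R0 /\ Rabs (v t) <= R0).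
  { intros t Ht. destruct (Hbuv t Ht) as [U1 U2].
    assert (B * Rabs (t - t0) <= B * h) by (apply Rmult_le_compat_l; lra).
    assert (HM : M <= Rabs M) by apply Rle_abs.
    split.
    - replace (u t) with ((u t - x t0) + x t0) by ring. eapply Rle_trans; [apply Rabs_triang|]. unfold R0. lra.
    - replace (v t) with ((v t - y t0) + y t0) by ring. eapply Rle_trans; [apply Rabs_triang|]. unfold R0. lra. }
  assert (Huniq : forall s, t0 <= s < b -> x s = u s /\ y s = v s).
  { intros s Hs.
    apply (gronwall2 x y u v (fun t => S2_f m (x t) (y t)) (fun t => S2_g N m sigma p (x t) (y t) 0)
              (fun t => Fc m R0 (u t) (v t)) (fun t => Gc N m sigma p R0 (u t) (v t)) K t0 s); try lra.
    - intros t Ht. assert (Htb : t < b) by lra.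
      destruct (Hsol t Htb) as [D1 [D2 _]]. rewrite (Hz t Htb) in D2.
      assert (Htt : Rabs (t - t0) < h) by (unfold Rabs; destruct Rcase_abs; unfold t0 in *; lra).
      destruct (Huv t Htt) as [D3 D4]. auto.
    - intros t Ht. assert (Htb : t1 < t < b) by lra. destruct (Hbd t Htb) as [X1 X2].
      assert (HM : M <= Rabs M) by apply Rle_abs.
      assert (E1 : S2_f m (x t) (y t) = Fc m R0 (x t) (y t)).
      { unfold Fc. rewrite !cl_id; auto; unfold R0; lra. }
      assert (E2 : S2_g N m sigma p (x t) (y t) 0 = Gc N m sigma p R0 (x t) (y t)).
      { unfold Gc. rewrite !cl_id; auto; unfold R0; lra. }
      rewrite E1, E2. split; [apply Fc_lip| apply Gc_lip]; lra.
    - destruct (Hbuv t0) as [U1 U2]; [rewrite Rminus_diag, Rabs_R0; lra|].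
      rewrite Rminus_diag, Rabs_R0, Rmult_0_r in U1. assert (W := Rabs_pos (u t0 - x t0)). assert (W2 : Rabs (u t0 - x t0) = 0) by lra. apply Rabs_eq_0 in W2. lra.
    - destruct (Hbuv t0) as [U1 U2]; [rewrite Rminus_diag, Rabs_R0; lra|].
      rewrite Rminus_diag, Rabs_R0, Rmult_0_r in U2. assert (W := Rabs_pos (v t0 - y t0)). assert (W2 : Rabs (v t0 - y t0) = 0) by lra. apply Rabs_eq_0 in W2. lra. }
  set (X' := fun t => if Rlt_dec t b then x t else u t).
  set (Y' := fun t => if Rlt_dec t b then y t else v t).
  apply (Hmax (Finite (t0 + h)) X' Y' (fun _ => 0)).
  - simpl. unfold t0. lra.
  - intros t Ht. simpl in Ht.
    assert (Hz0 : is_derive (fun _ : R => 0) t (S2_h m sigma p (Y' t) 0)).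
    { replace (S2_h m sigma p (Y' t) 0) with 0 by (unfold S2_h; ring).
      apply (is_derive_const (K := R_AbsRing) (V := R_NormedModule)). }
    destruct (Rlt_dec t b) as [Htb|Htb].
    + assert (Hloc : locally t (fun s => x s = X' s /\ y s = Y' s)).
      { exists (mkposreal (b - t) ltac:(lra)). intros s Hs. simpl in Hs. unfold ball in Hs; simpl in Hs.
        unfold AbsRing_ball, abs, minus, plus, opp in Hs; simpl in Hs.
        assert (s < b) by (unfold Rabs in Hs; destruct Rcase_abs in Hs; lra).
        unfold X', Y'. destruct (Rlt_dec s b); [auto|lra]. }
      destruct (Hsol t Htb) as [D1 [D2 _]]. rewrite (Hz t Htb) in D2.
      assert (EX : X' t = x t) by (unfold X'; destruct (Rlt_dec t b); [auto|lra]).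
      assert (EY : Y' t = y t) by (unfold Y'; destruct (Rlt_dec t b); [auto|lra]).
      rewrite EX, EY. split; [|split; [|rewrite <- EY; exact Hz0]].
      * apply (is_derive_ext_loc x); auto. eapply filter_imp; [|exact Hloc]. simpl. tauto.
      * apply (is_derive_ext_loc y); auto. eapply filter_imp; [|exact Hloc]. simpl. tauto.
    + assert (Htt : Rabs (t - t0) < h) by (unfold Rabs; destruct Rcase_abs; unfold t0 in *; lra).
      assert (Hloc : locally t (fun s => u s = X' s /\ v s = Y' s)).
      { exists (mkposreal (Rmin (t - t0) (t0 + h - t)) ltac:(apply Rmin_pos; unfold t0 in *; lra)).
        intros s Hs. unfold ball in Hs; simpl in Hs.
        unfold AbsRing_ball, abs, minus, plus, opp in Hs; simpl in Hs.
        assert (A1 := Rmin_l (t - t0) (t0 + h - t)). assert (A2 := Rmin_r (t - t0) (t0 + h - t)).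
        assert (t0 < s) by (unfold Rabs in Hs; destruct Rcase_abs in Hs; lra).
        unfold X', Y'. destruct (Rlt_dec s b); [|auto].
        destruct (Huniq s); [lra|]. auto. }
      destruct (Huv t Htt) as [D1 D2].
      assert (EX : X' t = u t) by (unfold X'; destruct (Rlt_dec t b); [lra|auto]).
      assert (EY : Y' t = v t) by (unfold Y'; destruct (Rlt_dec t b); [lra|auto]).
      destruct (Hub t (Rlt_le _ _ Htt)) as [Ub Vb].
      assert (E1 : Fc m R0 (u t) (v t) = S2_f m (u t) (v t)) by (unfold Fc; rewrite !cl_id; auto).
      assert (E2 : Gc N m sigma p R0 (u t) (v t) = S2_g N m sigma p (u t) (v t) 0) by (unfold Gc; rewrite !cl_id; auto).
      rewrite E1 in D1. rewrite E2 in D2.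
      rewrite EX, EY. split; [|split; [|rewrite <- EY; exact Hz0]].
      * apply (is_derive_ext_loc u); auto. eapply filter_imp; [|exact Hloc]. simpl. tauto.
      * apply (is_derive_ext_loc v); auto. eapply filter_imp; [|exact Hloc]. simpl. tauto.
  - intros t Ht. simpl in Ht. unfold X', Y'. destruct (Rlt_dec t b); [|lra].
    split; auto. split; auto. symmetry. auto.
Qed.

Lemma D_down (T : Rbar) (t s : R) : Rbar_lt t T -> s <= t -> Rbar_lt s T.
Proof. intros H Hs. destruct T; simpl in *; try contradiction; auto; lra. Qed.

Lemma D_loc (T : Rbar) (t : R) : Rbar_lt t T -> exists r : posreal, forall s, Rabs (s - t) < r -> Rbar_lt s T.
Proof.
  intros H. destruct T as [b| |]; simpl in H.
  - exists (mkposreal (b - t) ltac:(lra)). intros s Hs. simpl in *.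
    unfold Rabs in Hs; destruct Rcase_abs in Hs; lra.
  - exists (mkposreal 1 ltac:(lra)). intros; simpl; auto.
  - contradiction.
Qed.

Lemma D_locally (T : Rbar) (t : R) : Rbar_lt t T -> locally t (fun s => Rbar_lt s T).
Proof. intros H. destruct (D_loc T t H) as [r Hr]. exists r. intros s Hs. apply Hr. exact Hs. Qed.

Lemma intfac (T : Rbar) (c : R -> R) (t1 : R) : Rbar_lt t1 T ->
  (forall t : R, Rbar_lt t T -> continuous c t) ->
  exists G : R -> R, forall t : R, Rbar_lt t T -> 0 < G t /\ is_derive G t (c t * G t).
Proof.
  intros Ht1 Hc.
  assert (Hex : forall b : R, Rbar_lt b T -> ex_RInt c t1 b).
  { intros b Hb. apply (ex_RInt_continuous (V := R_CompleteNormedModule)). intros z Hz. apply Hc.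
    apply (D_down T (Rmax t1 b)); [unfold Rmax; destruct Rle_dec; auto| lra]. }
  exists (fun t => exp (RInt c t1 t)). intros t Ht. split; [apply exp_pos|].
  assert (HR : is_derive (fun s => RInt c t1 s) t (c t)).
  { assert (Hloc : locally t (fun b => is_RInt c t1 b (RInt c t1 b))).
    { eapply filter_imp; [|apply (D_locally T t Ht)]. intros s Hs.
      apply (RInt_correct (V := R_CompleteNormedModule)). auto. }
    exact (is_derive_RInt (V := R_CompleteNormedModule) _ _ t1 t Hloc (Hc t Ht)). }
  assert (H := is_derive_comp exp (fun s => RInt c t1 s) t _ _ (is_derive_exp _) HR).
  apply (is_derive_eq _ _ _ _ H). simpl. unfold scal; simpl. unfold mult; simpl. ring.
Qed.

Lemma lim_eps (f : R -> R) (l : R) : is_lim f m_infty l ->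
  forall eps, 0 < eps -> exists M, forall s, s < M -> Rabs (f s - l) < eps.
Proof.
  intros H eps He. apply is_lim_spec in H. destruct (H (mkposreal eps He)) as [M HM].
  exists M. intros s Hs. apply HM. auto.
Qed.

Lemma L_pos (T : Rbar) (w a F : R -> R) (t2 : R) :
  Rbar_lt t2 T ->
  (forall t : R, Rbar_lt t T -> is_derive w t (- a t * w t + F t)) ->
  (forall t : R, Rbar_lt t T -> 0 < F t) ->
  (forall t : R, Rbar_lt t T -> continuous a t) ->
  (forall s, s < t2 -> 0 < a s) ->
  (forall eps, 0 < eps -> exists M, forall s, s < M -> Rabs (w s) < eps) ->
  forall t : R, Rbar_lt t T -> 0 < w t.
Proof.
  intros Ht2 Hd HF Ha Hpos Hlim t Ht.
  set (t3 := Rmin t t2).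
  assert (Ht3 : Rbar_lt t3 T) by (apply (D_down T t); auto; apply Rmin_l).
  assert (Hex : exists s, s < t3 /\ 0 < w s).
  { apply NNPP. intro Hn.
    assert (Hle : forall s, s < t3 -> w s <= 0).
    { intros s Hs. destruct (Rle_or_lt (w s) 0); auto. exfalso. apply Hn. exists s. auto. }
    assert (Hinc : forall s1 s2, s1 < s2 -> s2 < t3 -> w s1 < w s2).
    { intros s1 s2 H12 H2. apply (incr_strict w (fun t => - a t * w t + F t)); auto.
      - intros s Hs. apply Hd. apply (D_down T t3); auto. lra.
      - intros s Hs. assert (s < t2) by (assert (t3 <= t2) by apply Rmin_r; lra).
        assert (0 < a s) by auto. assert (w s <= 0) by (apply Hle; lra).
        assert (0 < F s) by (apply HF; apply (D_down T t3); auto; lra). nra. }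
    set (s1 := t3 - 1).
    assert (Hw1 : w s1 < 0).
    { assert (w s1 < w (t3 - 1/2)) by (apply Hinc; unfold s1; lra). assert (w (t3 - 1/2) <= 0) by (apply Hle; lra). lra. }
    destruct (Hlim (- w s1) ltac:(lra)) as [M HM].
    set (s0 := Rmin M s1 - 1).
    assert (Hs0 : s0 < M) by (unfold s0; assert (Rmin M s1 <= M) by apply Rmin_l; lra).
    assert (Hs01 : s0 < s1) by (unfold s0; assert (Rmin M s1 <= s1) by apply Rmin_r; lra).
    specialize (HM s0 Hs0).
    assert (w s0 < w s1) by (apply Hinc; unfold s1 in *; lra).
    unfold Rabs in HM; destruct Rcase_abs in HM; lra. }
  destruct Hex as [s [Hs Hws]].
  destruct (intfac T a t Ht Ha) as [G HG].
  assert (Hs' : s < t) by (assert (t3 <= t) by apply Rmin_l; lra).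
  assert (Hsd : Rbar_lt s T) by (apply (D_down T t); auto; lra).
  assert (Hmono : w s * G s < w t * G t).
  { apply (incr_strict (fun u => w u * G u) (fun u => F u * G u)); auto.
    - intros u Hu. assert (Hud : Rbar_lt u T) by (apply (D_down T t); auto; lra).
      destruct (HG u Hud) as [_ HGd]. assert (Hw := Hd u Hud).
      apply (is_derive_eq _ _ _ _ (is_derive_mult _ _ _ _ _ Hw HGd (fun a b => Rmult_comm a b))).
      destruct (HG u Hud) as [_ _]. simpl. unfold plus, mult; simpl. ring.
    - intros u Hu. assert (Hud : Rbar_lt u T) by (apply (D_down T t); auto; lra).
      destruct (HG u Hud) as [HGp _]. assert (0 < F u) by auto. nra. }
  destruct (HG s Hsd) as [G1 _]. destruct (HG t Ht) as [G2 _].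
  assert (0 < w s * G s) by nra. nra.
Qed.

Lemma L_zero (T : Rbar) (w a : R -> R) (t2 : R) :
  Rbar_lt t2 T ->
  (forall t : R, Rbar_lt t T -> is_derive w t (- a t * w t)) ->
  (forall t : R, Rbar_lt t T -> continuous a t) ->
  (forall s, s < t2 -> 0 < a s) ->
  (forall eps, 0 < eps -> exists M, forall s, s < M -> Rabs (w s) < eps) ->
  forall t : R, Rbar_lt t T -> w t = 0.
Proof.
  intros Ht2 Hd Ha Hpos Hlim t Ht.
  assert (Hnear : forall s, s < t2 -> w s = 0).
  { intros s Hs.
    assert (Hdec : forall s0, s0 < s -> (w s)^2 <= (w s0)^2).
    { intros s0 Hs0. apply (decr_weak (fun u => (w u)^2) (fun u => 2 * w u * (- a u * w u))); [lra| |].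
      - intros u Hu. assert (Hud : Rbar_lt u T) by (apply (D_down T t2); auto; lra).
        assert (Hw := Hd u Hud). auto_derive. solve_exd. rw_der Hw. ring.
      - intros u Hu. assert (0 < a u) by (apply Hpos; lra). assert (0 <= (w u)^2) by apply pow2_ge_0.
        simpl in *. nra. }
    apply NNPP. intro Hne.
    assert (Hp : 0 < Rabs (w s)) by (apply Rabs_pos_lt; auto).
    destruct (Hlim (Rabs (w s)) Hp) as [M HM].
    set (s0 := Rmin M s - 1).
    assert (Hs0 : s0 < M) by (unfold s0; assert (Rmin M s <= M) by apply Rmin_l; lra).
    assert (Hs01 : s0 < s) by (unfold s0; assert (Rmin M s <= s) by apply Rmin_r; lra).
    specialize (HM s0 Hs0). specialize (Hdec s0 Hs01).
    rewrite <- (pow2_abs (w s)), <- (pow2_abs (w s0)) in Hdec.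
    assert (P := Rabs_pos (w s0)). simpl in Hdec. nra. }
  set (s := Rmin t t2 - 1).
  assert (Hs : s < t2) by (unfold s; assert (Rmin t t2 <= t2) by apply Rmin_r; lra).
  assert (Hst : s < t) by (unfold s; assert (Rmin t t2 <= t) by apply Rmin_l; lra).
  destruct (intfac T a t Ht Ha) as [G HG].
  assert (E : w t * G t = w s * G s).
  { apply (const_deriv (fun u => w u * G u) (fun u => 0)); [lra| |auto].
    intros u Hu. assert (Hud : Rbar_lt u T) by (apply (D_down T t); auto; lra).
    destruct (HG u Hud) as [_ HGd]. assert (Hw := Hd u Hud).
    apply (is_derive_eq _ _ _ _ (is_derive_mult _ _ _ _ _ Hw HGd (fun a b => Rmult_comm a b))).
    simpl. unfold plus, mult; simpl. ring. }
  rewrite (Hnear s Hs) in E. destruct (HG t Ht) as [G1 _].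
  assert (w t * G t = 0) by lra. apply Rmult_integral in H. destruct H; auto; lra.
Qed.

Lemma fl_pinf (f : R -> R) (l : R) : (forall eps, 0 < eps -> exists M, forall t, M < t -> Rabs (f t - l) < eps) ->
  filterlim f (Rbar_locally p_infty) (locally l).
Proof.
  intros H. apply filterlim_locally. intro eps. destruct (H eps (cond_pos eps)) as [M HM].
  exists M. intros t Ht. unfold ball; simpl. unfold AbsRing_ball, abs, minus, plus, opp; simpl. apply HM; auto.
Qed.

Lemma fl_left (f : R -> R) (b l : R) : (forall eps, 0 < eps -> exists s, s < b /\ forall t, s < t < b -> Rabs (f t - l) < eps) ->
  filterlim f (at_left b) (locally l).
Proof.
  intros H. apply filterlim_locally. intro eps. destruct (H eps (cond_pos eps)) as [s [Hs HM]].
  exists (mkposreal (b - s) ltac:(lra)). intros t Ht Htb. unfold ball in Ht; simpl in Ht.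
  unfold AbsRing_ball, abs, minus, plus, opp in Ht; simpl in Ht.
  unfold ball; simpl. unfold AbsRing_ball, abs, minus, plus, opp; simpl. apply HM.
  unfold Rabs in Ht; destruct Rcase_abs in Ht; lra.
Qed.

Lemma fl_left_minf (f : R -> R) (b : R) : (forall K, exists s, s < b /\ forall t, s < t < b -> f t < K) ->
  filterlim f (at_left b) (Rbar_locally m_infty).
Proof.
  intros H P [M HM]. destruct (H M) as [s [Hs HK]]. unfold filtermap.
  exists (mkposreal (b - s) ltac:(lra)). intros t Ht Htb. unfold ball in Ht; simpl in Ht.
  unfold AbsRing_ball, abs, minus, plus, opp in Ht; simpl in Ht.
  apply HM. apply HK. unfold Rabs in Ht; destruct Rcase_abs in Ht; lra.
Qed.

Section Main.
Variables (N : nat) (m sigma p : R) (T : Rbar) (x y z : R -> R).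
Hypothesis HN : (3 <= N)%nat.
Hypothesis Hm : 1 < m.
Hypothesis Hsig : 0 < sigma.
Hypothesis Hp : m < p.
Hypothesis Hsol : S2_sol (INR N) m sigma p T x y z.
Hypothesis Hmax : S2_maximal (INR N) m sigma p T x y z.
Hypothesis Hzx : forall t : R, Rbar_lt t T -> z t = 0 /\ 0 < x t.
Hypothesis Hlx : is_lim x m_infty 0.
Hypothesis Hly : is_lim y m_infty 0.
Hypothesis Hlyx : is_lim (fun t => y t / x t) m_infty (- / INR N).

Definition nn := INR N.
Definition kk := (p - m) / (sigma + 2).

Lemma nn_ge3 : 3 <= nn.
Proof. unfold nn. replace 3 with (INR 3) by (simpl; ring). apply le_INR; auto. Qed.

Lemma kk_pos : 0 < kk.
Proof. unfold kk. apply Rdiv_lt_0_compat; lra. Qed.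

Lemma T_not_minf : T <> m_infty.
Proof.
  intro HT. apply (Hmax p_infty (fun _ => 0) (fun _ => 0) (fun _ => 0)).
  - rewrite HT; simpl; auto.
  - intros t _. split; [|split].
    + replace (S2_f m 0 0) with 0 by (unfold S2_f; ring). apply (is_derive_const (K := R_AbsRing) (V := R_NormedModule)).
    + replace (S2_g (INR N) m sigma p 0 0 0) with 0 by (unfold S2_g; ring). apply (is_derive_const (K := R_AbsRing) (V := R_NormedModule)).
    + replace (S2_h m sigma p 0 0) with 0 by (unfold S2_h; ring). apply (is_derive_const (K := R_AbsRing) (V := R_NormedModule)).
  - intros t Ht. rewrite HT in Ht. simpl in Ht. contradiction.
Qed.

Lemma exists_D : exists tD : R, Rbar_lt tD T.
Proof.
  assert (HT := T_not_minf).
  assert (G : forall T' : Rbar, T' <> m_infty -> exists tD : R, Rbar_lt tD T').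
  { intros T' H. destruct T' as [b| |].
    - exists (b - 1). simpl. lra.
    - exists 0. simpl. auto.
    - exfalso. apply H. auto. }
  apply G; auto.
Qed.

Lemma dx (t : R) : Rbar_lt t T -> is_derive x t (x t * (2 - (m - 1) * y t)).
Proof. intro Ht. apply (Hsol t Ht). Qed.

Lemma dy (t : R) : Rbar_lt t T -> is_derive y t (- x t - (nn - 2) * y t - m * y t ^ 2 - kk * x t * y t).
Proof.
  intro Ht. destruct (Hsol t Ht) as [_ [H _]]. destruct (Hzx t Ht) as [Hz _].
  unfold S2_g in H. rewrite Hz in H. apply (is_derive_eq _ _ _ _ H). unfold nn, kk. ring.
Qed.

Lemma xpos (t : R) : Rbar_lt t T -> 0 < x t.
Proof. intro Ht. apply (Hzx t Ht). Qed.

Lemma cont_x (t : R) : Rbar_lt t T -> continuous x t.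
Proof. intro Ht. apply (ex_derive_continuous (K := R_AbsRing) (V := R_NormedModule)). eexists. apply dx; auto. Qed.
Lemma cont_y (t : R) : Rbar_lt t T -> continuous y t.
Proof. intro Ht. apply (ex_derive_continuous (K := R_AbsRing) (V := R_NormedModule)). eexists. apply dy; auto. Qed.

Lemma near_minf : exists t2 : R, Rbar_lt t2 T /\
  forall s, s < t2 -> y s < 0 /\ - / (2 * m) < y s /\ Rbar_lt s T.
Proof.
  destruct exists_D as [tD HtD].
  assert (Hn := nn_ge3).
  destruct (lim_eps y 0 Hly (/ (2 * m))) as [M1 HM1]; [apply Rinv_0_lt_compat; lra|].
  destruct (lim_eps _ _ Hlyx (/ (2 * nn))) as [M2 HM2]; [apply Rinv_0_lt_compat; lra|].
  exists (Rmin (Rmin M1 M2) tD). assert (A1 := Rmin_l (Rmin M1 M2) tD). assert (A2 := Rmin_r (Rmin M1 M2) tD).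
  assert (A3 := Rmin_l M1 M2). assert (A4 := Rmin_r M1 M2).
  split; [apply (D_down T tD); auto|].
  intros s Hs. assert (Hsd : Rbar_lt s T) by (apply (D_down T tD); auto; lra).
  specialize (HM1 s ltac:(lra)). specialize (HM2 s ltac:(lra)). rewrite Rminus_0_r in HM1.
  assert (Hx := xpos s Hsd).
  split; [|split; auto].
  - fold nn in HM2. assert (y s / x s < 0).
    { apply Rabs_def2 in HM2. destruct HM2 as [H1 H2].
      assert (/ (2 * nn) < / nn).
      { apply Rinv_lt_contravar; nra. }
      replace (/ (2 * nn)) with (/ nn * / 2) in * by (field; lra). lra. }
    unfold Rdiv in H. assert (0 < / x s) by (apply Rinv_0_lt_compat; auto). nra.
  - apply Rabs_def2 in HM1. lra.
Qed.

Lemma lim_eps0 (f : R -> R) : is_lim f m_infty 0 -> forall eps, 0 < eps -> exists M, forall s, s < M -> Rabs (f s) < eps.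
Proof. intros H eps He. destruct (lim_eps f 0 H eps He) as [M HM]. exists M. intros s Hs. rewrite <- (Rminus_0_r (f s)). auto. Qed.

Lemma y_neg : forall t : R, Rbar_lt t T -> y t < 0.
Proof.
  destruct near_minf as [t2 [Ht2 Hnear]].
  intros t Ht.
  assert (H : 0 < - y t); [|lra].
  apply (L_pos T (fun s => - y s) (fun s => nn - 2 + m * y s + kk * x s) x t2); auto.
  - intros s Hs. assert (D := dy s Hs). auto_derive. solve_exd. rw_der D. ring.
  - apply xpos.
  - intros s Hs. apply (continuous_plus (fun s => nn - 2 + m * y s) (fun s => kk * x s)).
    + apply (continuous_plus (fun _ => nn - 2) (fun s => m * y s)). apply continuous_const.
      apply (continuous_scal_r m y). apply cont_y; auto.
    + apply (continuous_scal_r kk x). apply cont_x; auto.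
  - intros s Hs. destruct (Hnear s Hs) as [H1 [H2 H3]]. assert (Hx := xpos s H3).
    assert (Hk := kk_pos). assert (Hn := nn_ge3).
    assert (m * y s > - / 2) by (apply (Rmult_lt_compat_l m) in H2; [|lra];
      replace (m * - / (2 * m)) with (- / 2) in H2 by (field; lra); lra).
    assert (0 < kk * x s) by nra. lra.
  - intros eps He. destruct (lim_eps0 y Hly eps He) as [M HM]. exists M. intros. rewrite Rabs_Ropp. auto.
Qed.


Lemma dw (t : R) : Rbar_lt t T -> is_derive (fun s => y s + x s / nn) t
   (- (nn - 2 + m * y t) * (y t + x t / nn) + (- (kk - / nn) * x t * y t)).
Proof.
  intro Ht. assert (Dx := dx t Ht). assert (Dy := dy t Ht). assert (Hn := nn_ge3).
  auto_derive. solve_exd. rw_der Dx. rw_der Dy. field. lra.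
Qed.

Lemma cont_a (t : R) : Rbar_lt t T -> continuous (fun s => nn - 2 + m * y s) t.
Proof.
  intro Ht. apply (continuous_plus (fun _ => nn - 2) (fun s => m * y s)). apply continuous_const.
  apply (continuous_scal_r m y). apply cont_y; auto.
Qed.

Lemma a_pos_near : exists t2 : R, Rbar_lt t2 T /\ forall s, s < t2 -> 0 < nn - 2 + m * y s.
Proof.
  destruct near_minf as [t2 [Ht2 Hnear]]. exists t2. split; auto.
  intros s Hs. destruct (Hnear s Hs) as [H1 [H2 H3]]. assert (Hn := nn_ge3).
  assert (m * y s > - / 2) by (apply (Rmult_lt_compat_l m) in H2; [|lra];
      replace (m * - / (2 * m)) with (- / 2) in H2 by (field; lra); lra). lra.
Qed.

Lemma w_lim : forall eps, 0 < eps -> exists M, forall s, s < M -> Rabs (y s + x s / nn) < eps.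
Proof.
  intros eps He. assert (Hn := nn_ge3).
  destruct (lim_eps0 y Hly (eps/2)) as [M1 HM1]; [lra|].
  destruct (lim_eps0 x Hlx (eps/2)) as [M2 HM2]; [lra|].
  exists (Rmin M1 M2). intros s Hs. assert (A1 := Rmin_l M1 M2). assert (A2 := Rmin_r M1 M2).
  specialize (HM1 s ltac:(lra)). specialize (HM2 s ltac:(lra)).
  eapply Rle_lt_trans; [apply Rabs_triang|].
  unfold Rdiv. rewrite Rabs_mult. rewrite (Rabs_right (/ nn)) by (apply Rle_ge, Rlt_le, Rinv_0_lt_compat; lra).
  assert (/ nn < 1) by (rewrite <- Rinv_1; apply Rinv_lt_contravar; lra).
  assert (0 < / nn) by (apply Rinv_0_lt_compat; lra).
  assert (Rabs (x s) * / nn <= Rabs (x s)) by (assert (P := Rabs_pos (x s)); nra). lra.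
Qed.

Lemma w_pos : 0 < kk - / nn -> forall t : R, Rbar_lt t T -> 0 < y t + x t / nn.
Proof.
  intros Hd. destruct a_pos_near as [t2 [Ht2 Ha]].
  apply (L_pos T (fun s => y s + x s / nn) (fun s => nn - 2 + m * y s) (fun s => - (kk - / nn) * x s * y s) t2); auto.
  - apply dw.
  - intros t Ht. assert (Hx := xpos t Ht). assert (Hy := y_neg t Ht). assert (0 < x t * - y t) by nra. nra.
  - apply cont_a.
  - apply w_lim.
Qed.

Lemma w_neg : kk - / nn < 0 -> forall t : R, Rbar_lt t T -> y t + x t / nn < 0.
Proof.
  intros Hd t Ht. destruct a_pos_near as [t2 [Ht2 Ha]].
  assert (0 < - (y t + x t / nn)); [|lra].
  apply (L_pos T (fun s => - (y s + x s / nn)) (fun s => nn - 2 + m * y s) (fun s => (kk - / nn) * x s * y s) t2); auto.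
  - intros s Hs. assert (D := dw s Hs).
    assert (D2 := is_derive_opp _ _ _ D).
    apply (is_derive_eq _ _ _ _ D2). simpl. unfold opp; simpl. ring.
  - intros s Hs. assert (Hx := xpos s Hs). assert (Hy := y_neg s Hs). assert (0 < x s * - y s) by nra. nra.
  - apply cont_a.
  - intros eps He. destruct (w_lim eps He) as [M HM]. exists M. intros. rewrite Rabs_Ropp. auto.
Qed.

Lemma w_zero : kk = / nn -> forall t : R, Rbar_lt t T -> y t + x t / nn = 0.
Proof.
  intros Hd. destruct a_pos_near as [t2 [Ht2 Ha]].
  apply (L_zero T (fun s => y s + x s / nn) (fun s => nn - 2 + m * y s) t2); auto.
  - intros t Ht. apply (is_derive_eq _ _ _ _ (dw t Ht)). rewrite Hd. ring.
  - apply cont_a.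
  - apply w_lim.
Qed.


Lemma x_exp_lb (s t : R) : Rbar_lt t T -> s <= t -> x s * exp (-2 * s) <= x t * exp (-2 * t).
Proof.
  intros Ht Hst.
  apply (incr_weak (fun u => x u * exp (-2 * u)) (fun u => x u * exp (-2 * u) * (- (m - 1) * y u))); auto.
  - intros u Hu. assert (Hud : Rbar_lt u T) by (apply (D_down T t); auto; lra).
    assert (Dx := dx u Hud). auto_derive. solve_exd. rw_der Dx. ring.
  - intros u Hu. assert (Hud : Rbar_lt u T) by (apply (D_down T t); auto; lra).
    assert (Hx := xpos u Hud). assert (Hy := y_neg u Hud). assert (He := exp_pos (-2 * u)).
    assert (0 < x u * exp (-2 * u)) by nra. assert (0 < - (m - 1) * y u) by nra. nra.
Qed.

Lemma x_lin_lb (t : R) : Rbar_lt t T -> Rbar_lt 0 T -> 0 <= t -> x 0 * (1 + 2 * t) <= x t.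
Proof.
  intros Ht H0 Ht0. assert (H := x_exp_lb 0 t Ht Ht0). rewrite Rmult_0_r, exp_0, Rmult_1_r in H.
  assert (E : exp (-2 * t) * exp (2 * t) = 1) by (rewrite <- exp_plus; replace (-2 * t + 2 * t) with 0 by ring; apply exp_0).
  assert (He : 1 + 2 * t <= exp (2 * t)).
  { destruct (Req_dec t 0) as [->|Hne]. rewrite Rmult_0_r, exp_0. lra. apply Rlt_le, exp_ineq1. lra. }
  assert (Hx0 : 0 < x 0) by (apply xpos; auto).
  assert (x 0 * exp (2 * t) <= x t * exp (-2 * t) * exp (2 * t)) by (apply Rmult_le_compat_r; [apply Rlt_le, exp_pos|auto]).
  rewrite Rmult_assoc, E, Rmult_1_r in H1. nra.
Qed.

Lemma dY (t : R) : Rbar_lt t T -> is_derive (fun s => y s / x s) t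
   (-1 - nn * (y t / x t) - y t ^ 2 / x t - kk * y t).
Proof.
  intro Ht. assert (Dx := dx t Ht). assert (Dy := dy t Ht). assert (Hx := xpos t Ht).
  auto_derive. solve_exd. rw_der Dx. rw_der Dy. field. lra.
Qed.

Lemma c_fin : 0 < kk - / nn -> forall b, T = Finite b -> False.
Proof.
  intros Hd b HT.
  assert (Hn := nn_ge3).
  set (dl := kk - / nn). assert (Hdl0 : 0 < dl) by exact Hd.
  set (t1 := b - 1).
  assert (HD : forall u, u < b -> Rbar_lt u T) by (intros; rewrite HT; simpl; auto).
  set (Gf := fun u => y u / x u - (dl / (m - 1)) * (ln (x u) - 2 * u) + u).
  assert (HG : forall t, t1 <= t < b -> Gf t1 <= Gf t).
  { intros t Ht.
    apply (incr_weak Gf (fun u => (- y u) * (nn + y u + x u / nn) / x u)); [lra| |].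
    - intros u Hu. assert (Hud : Rbar_lt u T) by (apply HD; lra).
      assert (Dx := dx u Hud). assert (Dy := dy u Hud). assert (Hx := xpos u Hud).
      unfold Gf. auto_derive. solve_exd. rw_der Dx. rw_der Dy. unfold dl. field. repeat split; lra.
    - intros u Hu. assert (Hud : Rbar_lt u T) by (apply HD; lra).
      assert (Hx := xpos u Hud). assert (Hy := y_neg u Hud). assert (Hw := w_pos Hd u Hud).
      apply Rmult_le_pos; [| apply Rlt_le, Rinv_0_lt_compat; auto]. apply Rmult_le_pos; lra. }
  set (A := ((m - 1) / dl) * ((2 * dl / (m - 1) + 1) * Rabs b + Rabs (Gf t1))).
  apply (no_bounded_end nn m sigma p b (exp A) t1 x y z).
  - rewrite <- HT. exact Hsol.
  - rewrite <- HT. exact Hmax.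
  - intros t Ht. apply Hzx. apply HD; auto.
  - unfold t1; lra.
  - intros t Ht. assert (Htd : Rbar_lt t T) by (apply HD; lra).
    assert (Hx := xpos t Htd). assert (Hy := y_neg t Htd). assert (Hw := w_pos Hd t Htd).
    assert (Hxb : x t <= exp A).
    { specialize (HG t ltac:(lra)). unfold Gf in HG.
      assert (HY : y t / x t < 0) by (unfold Rdiv; assert (0 < / x t) by (apply Rinv_0_lt_compat; auto); nra).
      assert (Hdl : 0 < dl / (m - 1)) by (apply Rdiv_lt_0_compat; lra).
      assert (Hb1 : t <= Rabs b) by (assert (b <= Rabs b) by apply Rle_abs; lra).
      assert (Hb2 : - (Gf t1) <= Rabs (Gf t1)) by (rewrite <- Rabs_Ropp; apply Rle_abs).
      assert (HL : ln (x t) <= A).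
      { unfold A. assert (HGt1 : Gf t1 = y t1 / x t1 - dl / (m - 1) * (ln (x t1) - 2 * t1) + t1) by reflexivity.
        assert (Hc : 0 <= 2 * dl / (m - 1) + 1) by (assert (0 <= 2 * dl / (m-1)) by (apply Rlt_le, Rdiv_lt_0_compat; lra); lra).
        assert (Ht2 : (2 * dl / (m - 1) + 1) * t <= (2 * dl / (m - 1) + 1) * Rabs b) by (apply Rmult_le_compat_l; auto).
        assert (E : dl / (m - 1) * ln (x t) <= (2 * dl / (m - 1) + 1) * Rabs b + Rabs (Gf t1)).
        { replace ((2 * dl / (m - 1) + 1) * t) with (2 * (dl / (m - 1)) * t + t) in Ht2 by (field; lra). lra. }
        apply (Rmult_le_compat_l ((m - 1) / dl)) in E; [|apply Rlt_le, Rdiv_lt_0_compat; lra].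
        replace ((m - 1) / dl * (dl / (m - 1) * ln (x t))) with (ln (x t)) in E by (field; lra). exact E. }
      rewrite <- (exp_ln (x t)) by auto. destruct (Req_dec (ln (x t)) A) as [->|Hne]; [lra|].
      apply Rlt_le, exp_increasing. lra. }
    rewrite (Rabs_right (x t)) by lra. rewrite (Rabs_left (y t)) by lra. split; auto.
    assert (x t / nn <= x t) by (unfold Rdiv; assert (/ nn < 1) by (rewrite <- Rinv_1; apply Rinv_lt_contravar; lra);
      assert (0 < / nn) by (apply Rinv_0_lt_compat; lra); nra). lra.
Qed.


Lemma c_inf : 0 < kk - / nn -> T = p_infty ->
  filterlim (X1 x) (Rbar_locally p_infty) (locally 0) /\
  filterlim (Y1 x y) (Rbar_locally p_infty) (locally 0) /\
  filterlim (Z1 x z) (Rbar_locally p_infty) (locally 0).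
Proof.
  intros Hd HT. assert (Hn := nn_ge3). assert (Hk := kk_pos).
  set (dl := kk - / nn). assert (Hdl0 : 0 < dl) by exact Hd.
  assert (HD : forall u : R, Rbar_lt u T) by (intros; rewrite HT; simpl; auto).
  set (x0 := x 0). assert (Hx0 : 0 < x0) by (apply xpos; auto).
  assert (Hlin : forall t, 0 <= t -> x0 * (1 + 2 * t) <= x t) by (intros; apply x_lin_lb; auto).
  split; [|split].
  - apply fl_pinf. intros eps He. exists (/ (2 * x0 * eps)). intros t Ht.
    assert (HM : 0 < / (2 * x0 * eps)) by (apply Rinv_0_lt_compat; nra).
    assert (H1 := Hlin t ltac:(lra)). assert (Hx := xpos t (HD t)).
    unfold X1. rewrite Rminus_0_r. rewrite Rabs_right by (apply Rle_ge, Rlt_le, Rinv_0_lt_compat; auto).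
    assert (H2 : 2 * x0 * eps * / (2 * x0 * eps) = 1) by (field; lra).
    assert (H4 : 2 * x0 * eps * / (2 * x0 * eps) < 2 * x0 * eps * t) by (apply Rmult_lt_compat_l; nra).
    assert (H5 : x0 * (1 + 2 * t) * eps <= x t * eps) by (apply Rmult_le_compat_r; lra).
    assert (H3 : 1 < x t * eps) by nra.
    apply (Rmult_lt_reg_r (x t)); auto. rewrite Rinv_l by lra. nra.
  - apply fl_pinf. intros eps He.
    set (lam := 2 / eps). assert (Hlam : 0 < lam) by (unfold lam; apply Rdiv_lt_0_compat; lra).
    set (t0 := / (dl * eps * x0)). assert (Ht0 : 0 < t0) by (unfold t0; apply Rinv_0_lt_compat; apply Rmult_lt_0_compat; nra).
    assert (Hbig : forall u, t0 <= u -> lam <= dl * x u).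
    { intros u Hu. assert (H1 := Hlin u ltac:(lra)).
      assert (dl * x0 * (2 * t0) = lam) by (unfold lam, t0; field; repeat split; lra).
      assert (dl * x0 * (2 * t0) <= dl * x0 * (1 + 2 * u)) by (apply Rmult_le_compat_l; nra). nra. }
    set (Phi := fun u => (y u / x u + / lam) * exp (lam * u)).
    assert (HPhi : forall t, t0 <= t -> Phi t0 <= Phi t).
    { intros t Ht.
      apply (incr_weak Phi (fun u => exp (lam * u) * ((y u / x u) * (- nn - y u - kk * x u + lam)))); auto.
      - intros u Hu. assert (Dx := dx u (HD u)). assert (Dy := dy u (HD u)). assert (Hx := xpos u (HD u)).
        unfold Phi. auto_derive. solve_exd. rw_der Dx. rw_der Dy. field. lra.
      - intros u Hu. assert (Hx := xpos u (HD u)). assert (Hy := y_neg u (HD u)). assert (Hw := w_pos Hd u (HD u)).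
        assert (Hb := Hbig u ltac:(lra)).
        assert (E : kk * x u = dl * x u + x u / nn) by (unfold dl; field; lra).
        assert (HY : y u / x u < 0) by (unfold Rdiv; assert (0 < / x u) by (apply Rinv_0_lt_compat; auto); nra).
        assert (HQ : - nn - y u - kk * x u + lam <= 0) by lra.
        assert (He2 := exp_pos (lam * u)). apply Rmult_le_pos; [lra|]. nra. }
    exists (t0 + 1). intros t Ht. assert (H := HPhi t ltac:(lra)). unfold Phi in H.
    assert (Hx := xpos t (HD t)). assert (Hy := y_neg t (HD t)).
    assert (Hx0' := xpos t0 (HD t0)). assert (Hw0 := w_pos Hd t0 (HD t0)).
    assert (HY0 : - / nn < y t0 / x t0).
    { apply (Rmult_lt_reg_r (x t0)); auto. unfold Rdiv. rewrite Rmult_assoc, Rinv_l, Rmult_1_r by lra.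
      replace (- / nn * x t0) with (- (x t0 / nn)) by (unfold Rdiv; ring). lra. }
    set (E := exp (lam * (t - t0))).
    assert (HE : exp (lam * t) = exp (lam * t0) * E) by (unfold E; rewrite <- exp_plus; f_equal; ring).
    assert (HE1 : 1 + lam <= E).
    { unfold E. apply Rlt_le. eapply Rle_lt_trans; [|apply exp_ineq1; nra]. nra. }
    rewrite HE in H. set (q := y t / x t + / lam). fold q in H.
    assert (Hq0 : (y t0 / x t0 + / lam) * exp (lam * t0) >= - / nn * exp (lam * t0)).
    { assert (0 < / lam) by (apply Rinv_0_lt_compat; auto). assert (He0 := exp_pos (lam * t0)). nra. }
    assert (Hinv : / nn <= 1) by (rewrite <- Rinv_1; apply Rinv_le_contravar; lra).
    assert (He0 := exp_pos (lam * t0)).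
    assert (Hq : q * E >= - 1).
    { assert (q * E * exp (lam * t0) >= - 1 * exp (lam * t0)) by nra.
      apply Rle_ge. apply (Rmult_le_reg_r (exp (lam * t0))); [lra|]. lra. }
    assert (Hql : q * lam > -1).
    { destruct (Rle_or_lt 0 q) as [Hq1|Hq1]; [nra|]. assert (q * E <= q * (1 + lam)) by nra. nra. }
    assert (HYt : y t / x t < 0) by (unfold Rdiv; assert (0 < / x t) by (apply Rinv_0_lt_compat; auto); nra).
    unfold Y1. rewrite Rminus_0_r. rewrite Rabs_left by auto.
    unfold q in Hql. assert (Hl : / lam * lam = 1) by (field; lra).
    assert (eps = 2 * / lam) by (unfold lam; field; lra). nra.
  - apply fl_pinf. intros eps He. exists 0. intros t Ht. unfold Z1. destruct (Hzx t (HD t)) as [Hz _].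
    rewrite Hz. unfold Rdiv. rewrite Rmult_0_l, Rminus_0_r, Rabs_R0. auto.
Qed.


Lemma mu_pos : kk - / nn < 0 -> 0 < m - kk * nn /\ kk * nn < 1.
Proof.
  intro Hd. assert (Hn := nn_ge3).
  assert (kk * nn < / nn * nn) by (apply Rmult_lt_compat_r; lra).
  rewrite Rinv_l in H by lra. lra.
Qed.

Lemma a_inf : kk - / nn < 0 -> T = p_infty -> False.
Proof.
  intros Hd HT. assert (Hn := nn_ge3). assert (Hk := kk_pos). destruct (mu_pos Hd) as [Hmu Hkn].
  set (mu := m - kk * nn). assert (Hmu0 : 0 < mu) by exact Hmu.
  assert (HD : forall u : R, Rbar_lt u T) by (intros; rewrite HT; simpl; auto).
  set (x0 := x 0). assert (Hx0 : 0 < x0) by (apply xpos; auto).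
  assert (Hlin : forall t, 0 <= t -> x0 * (1 + 2 * t) <= x t) by (intros; apply x_lin_lb; auto).
  set (c0 := 2 * (nn - 2) / mu).
  assert (Hc0 : 0 < c0) by (unfold c0; apply Rdiv_lt_0_compat; lra).
  set (t0 := nn * c0 / (2 * x0) + 1).
  assert (Ht0 : 1 <= t0) by (unfold t0; assert (0 <= nn * c0 / (2 * x0)) by (apply Rlt_le, Rdiv_lt_0_compat; nra); lra).
  assert (Hbig : forall u, t0 <= u -> c0 < - y u).
  { intros u Hu. assert (H1 := Hlin u ltac:(lra)). assert (Hw := w_neg Hd u (HD u)).
    assert (E : 2 * x0 * (nn * c0 / (2 * x0)) = nn * c0) by (field; lra).
    assert (Et0 : t0 = nn * c0 / (2 * x0) + 1) by reflexivity.
    assert (x0 * (2 * t0) <= x0 * (2 * u)) by (apply Rmult_le_compat_l; lra).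
    assert (x0 * (1 + 2 * u) > nn * c0) by (rewrite Et0 in *; nra).
    assert (x u / nn > c0).
    { apply (Rmult_lt_reg_r nn); [lra|]. unfold Rdiv. rewrite Rmult_assoc, Rinv_l, Rmult_1_r by lra. nra. }
    lra. }
  set (Psi := fun u => - / y u + (mu / 2) * u).
  assert (HPsi : forall t, t0 <= t -> Psi t <= Psi t0).
  { intros t Ht.
    apply (decr_weak Psi (fun u => (- x u - (nn - 2) * y u - m * y u ^ 2 - kk * x u * y u) / (y u)^2 + mu / 2)); auto.
    - intros u Hu. assert (Dy := dy u (HD u)). assert (Hy := y_neg u (HD u)).
      unfold Psi. auto_derive. solve_exd. rw_der Dy. field. lra.
    - intros u Hu. assert (Hy := y_neg u (HD u)). assert (Hx := xpos u (HD u)).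
      assert (Hw := w_neg Hd u (HD u)). assert (Hb := Hbig u ltac:(lra)).
      assert (Hxn : x u < nn * - y u) by (apply (Rmult_lt_reg_r (/ nn)); [apply Rinv_0_lt_compat; lra|];
        replace (nn * - y u * / nn) with (- y u) by (field; lra); unfold Rdiv in Hw; lra).
      assert (Hy2 : 0 < (y u)^2) by (simpl; nra).
      assert (Hnum : - x u - (nn - 2) * y u - m * y u ^ 2 - kk * x u * y u <= - (mu / 2) * (y u)^2).
      { assert (kk * x u * - y u <= kk * (nn * - y u) * - y u) by (apply Rmult_le_compat_r; [lra| apply Rmult_le_compat_l; lra]).
        assert (Hc : (nn - 2) <= mu / 2 * - y u).
        { unfold c0 in Hb. apply (Rmult_lt_compat_l (mu / 2)) in Hb; [|lra].
          replace (mu / 2 * (2 * (nn - 2) / mu)) with (nn - 2) in Hb by (field; lra). lra. }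
        assert ((nn - 2) * - y u <= mu / 2 * - y u * - y u) by (apply Rmult_le_compat_r; lra).
        unfold mu in *. simpl. nra. }
      assert (Hq : (- x u - (nn - 2) * y u - m * y u ^ 2 - kk * x u * y u) / (y u)^2 <= - (mu / 2)).
      { apply (Rmult_le_reg_r ((y u)^2)); auto. unfold Rdiv. rewrite Rmult_assoc, Rinv_l, Rmult_1_r by lra. lra. }
      lra. }
  set (t := t0 + 2 * (- / y t0) / mu + 1).
  assert (Hy0 := y_neg t0 (HD t0)).
  assert (Hp0 : 0 < - / y t0) by (rewrite Ropp_inv_permute by lra; apply Rinv_0_lt_compat; lra).
  assert (Htt : t0 <= t) by (unfold t; assert (0 < 2 * (- / y t0) / mu) by (apply Rdiv_lt_0_compat; lra); lra).
  specialize (HPsi t Htt). unfold Psi in HPsi.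
  assert (Hyt := y_neg t (HD t)).
  assert (Hpt : 0 < - / y t) by (rewrite Ropp_inv_permute by lra; apply Rinv_0_lt_compat; lra).
  assert (E : mu / 2 * t = mu / 2 * t0 + - / y t0 + mu / 2) by (unfold t; field; lra).
  lra.
Qed.


Lemma le_eps (a c : R) : (forall eps, 0 < eps -> a <= c + eps) -> a <= c.
Proof. intros H. destruct (Rle_or_lt a c); auto. specialize (H ((a - c) / 2) ltac:(lra)). lra. Qed.

Lemma a_fin_U : kk - / nn < 0 -> forall b, T = Finite b ->
  forall K, 0 < K -> exists s, s < b /\ forall t, s < t < b -> K < - y t.
Proof.
  intros Hd b HT K HK. assert (Hn := nn_ge3). assert (Hk := kk_pos). destruct (mu_pos Hd) as [Hmu Hkn].
  assert (HD : forall u, u < b -> Rbar_lt u T) by (intros; rewrite HT; simpl; auto).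
  set (t1 := b - 1).
  set (K' := K * exp (nn - 2)). assert (HK' : 0 < K') by (unfold K'; assert (H := exp_pos (nn - 2)); nra).
  destruct (classic (exists s, t1 < s < b /\ K' < - y s)) as [[s [Hs HKs]]|Hno].
  - exists s. split; [lra|]. intros t Ht.
    assert (Hmono : - y s * exp ((nn - 2) * s) <= - y t * exp ((nn - 2) * t)).
    { apply (incr_weak (fun u => - y u * exp ((nn - 2) * u))
          (fun u => exp ((nn - 2) * u) * (x u + m * (y u)^2 + kk * x u * y u))); [lra| |].
      - intros u Hu. assert (Dy := dy u (HD u ltac:(lra))). auto_derive. solve_exd. rw_der Dy. ring.
      - intros u Hu. assert (Hud : Rbar_lt u T) by (apply HD; lra).
        assert (Hy := y_neg u Hud). assert (Hx := xpos u Hud). assert (Hw := w_neg Hd u Hud).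
        assert (Hxn : x u < nn * - y u) by (apply (Rmult_lt_reg_r (/ nn)); [apply Rinv_0_lt_compat; lra|];
          replace (nn * - y u * / nn) with (- y u) by (field; lra); unfold Rdiv in Hw; lra).
        assert (kk * x u <= kk * (nn * - y u)) by (apply Rmult_le_compat_l; lra).
        assert (kk * x u < m * - y u) by nra.
        assert (0 <= m * (y u)^2 + kk * x u * y u) by (simpl; nra).
        assert (He := exp_pos ((nn - 2) * u)). apply Rmult_le_pos; lra. }
    assert (E1 : exp ((nn - 2) * t) < exp (nn - 2) * exp ((nn - 2) * s)).
    { rewrite <- exp_plus. apply exp_increasing. unfold t1 in Hs. nra. }
    assert (Hes := exp_pos ((nn - 2) * s)). assert (Het := exp_pos ((nn - 2) * t)).
    assert (Hyt := y_neg t (HD t ltac:(lra))).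
    assert (H1 : K' * exp ((nn - 2) * s) < - y t * exp ((nn - 2) * t)) by nra.
    unfold K' in H1. assert (H2 : - y t * exp ((nn - 2) * t) < - y t * (exp (nn - 2) * exp ((nn - 2) * s))) by nra.
    assert (Hen := exp_pos (nn - 2)). nra.
  - exfalso.
    assert (Hle : forall s, t1 < s < b -> - y s <= K').
    { intros s Hs. destruct (Rle_or_lt (- y s) K'); auto. exfalso. apply Hno. exists s. auto. }
    set (C := 2 + (m - 1) * K').
    assert (HC : 0 < C) by (unfold C; nra).
    assert (Hx1 := xpos t1 (HD t1 ltac:(unfold t1; lra))).
    apply (no_bounded_end nn m sigma p b (x t1 * exp C + K') t1 x y z).
    + rewrite <- HT. exact Hsol.
    + rewrite <- HT. exact Hmax.
    + intros t Ht. apply Hzx. apply HD; auto.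
    + unfold t1; lra.
    + intros t Ht. assert (Htd : Rbar_lt t T) by (apply HD; lra).
      assert (Hx := xpos t Htd). assert (Hy := y_neg t Htd).
      assert (Hm1 : x t * exp (- C * t) <= x t1 * exp (- C * t1)).
      { apply (decr_weak (fun u => x u * exp (- C * u)) (fun u => x u * exp (- C * u) * (2 - (m - 1) * y u - C))); [lra| |].
        - intros u Hu. assert (Dx := dx u (HD u ltac:(lra))). auto_derive. solve_exd. rw_der Dx. ring.
        - intros u Hu. assert (Hud : Rbar_lt u T) by (apply HD; lra).
          assert (Hxu := xpos u Hud). assert (Hyu := Hle u ltac:(lra)).
          assert (He := exp_pos (- C * u)). assert (0 < x u * exp (- C * u)) by nra.
          assert (2 - (m - 1) * y u - C <= 0) by (unfold C; nra). nra. }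
      assert (Hxb : x t <= x t1 * exp C).
      { assert (E : exp (- C * t) * exp (C * (t - t1)) = exp (- C * t1)) by (rewrite <- exp_plus; f_equal; ring).
        assert (E2 : exp (C * (t - t1)) <= exp C).
        { destruct (Req_dec (C * (t - t1)) C) as [->|Hne]; [lra|]. apply Rlt_le, exp_increasing. assert (t - t1 < 1) by (unfold t1 in *; lra). nra. }
        assert (He1 := exp_pos (C * (t - t1))). assert (He2 := exp_pos (- C * t)).
        assert (x t * exp (- C * t) * exp (C * (t - t1)) <= x t1 * exp (- C * t1) * exp (C * (t - t1)))
          by (apply Rmult_le_compat_r; lra).
        rewrite Rmult_assoc, E in H. 
        assert (He3 := exp_pos (- C * t1)).
        assert (x t <= x t1 * exp (C * (t - t1))) by (apply (Rmult_le_reg_r (exp (- C * t1))); auto; nra).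
        assert (x t1 * exp (C * (t - t1)) <= x t1 * exp C) by (apply Rmult_le_compat_l; lra). lra. }
      assert (Hyb := Hle t ltac:(lra)).
      assert (0 <= x t1 * exp C) by (assert (He := exp_pos C); nra).
      rewrite (Rabs_right (x t)) by lra. rewrite (Rabs_left (y t)) by lra. split; lra.
Qed.


Lemma a_fin : kk - / nn < 0 -> forall b, T = Finite b ->
  filterlim (Y1 x y) (at_left b) (Rbar_locally m_infty) /\
  filterlim (fun t => X1 x t / Y1 x y t) (at_left b) (locally 0).
Proof.
  intros Hd b HT. assert (Hn := nn_ge3). assert (Hk := kk_pos). destruct (mu_pos Hd) as [Hmu Hkn].
  assert (HD : forall u, u < b -> Rbar_lt u T) by (intros; rewrite HT; simpl; auto).
  assert (HU := a_fin_U Hd b HT).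
  split.
  - apply fl_left_minf.
    destruct (HU 1 ltac:(lra)) as [s1 [Hs1 H1]].
    set (Cc := nn + m). assert (HCc : 0 < Cc) by (unfold Cc; lra).
    assert (HB : forall t, s1 < t < b -> / (- y t) <= Cc * (b - t)).
    { intros t Ht. apply le_eps. intros eps He.
      destruct (HU (/ eps) ltac:(apply Rinv_0_lt_compat; lra)) as [se [Hse Hse2]].
      set (s' := (Rmax t se + b) / 2).
      assert (A1 := Rmax_l t se). assert (A2 := Rmax_r t se).
      assert (Hs'b : s' < b) by (unfold s'; assert (Rmax t se < b) by (unfold Rmax; destruct Rle_dec; lra); lra).
      assert (Hts' : t < s') by (unfold s'; assert (Rmax t se < b) by (unfold Rmax; destruct Rle_dec; lra); lra).
      assert (Hys' := Hse2 s' ltac:(unfold s' in *; lra)).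
      assert (Hyy := y_neg s' (HD s' Hs'b)).
      assert (Hi : / (- y s') < eps).
      { apply (Rmult_lt_reg_r (- y s')); [lra|]. rewrite Rinv_l by lra.
        apply (Rmult_lt_compat_l eps) in Hys'; [|lra]. rewrite Rinv_r in Hys' by lra. lra. }
      assert (Hmono : / (- y t) + Cc * t <= / (- y s') + Cc * s').
      { apply (incr_weak (fun u => / (- y u) + Cc * u)
           (fun u => (- x u - (nn - 2) * y u - m * y u ^ 2 - kk * x u * y u) / (y u)^2 + Cc)); [lra| |].
        - intros u Hu. assert (Hud : Rbar_lt u T) by (apply HD; lra).
          assert (Dy := dy u Hud). assert (Hy := y_neg u Hud).
          auto_derive. solve_exd. rw_der Dy. field. lra.
        - intros u Hu. assert (Hud : Rbar_lt u T) by (apply HD; lra).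
          assert (Hy := y_neg u Hud). assert (Hx := xpos u Hud). assert (Hw := w_neg Hd u Hud).
          assert (Hu1 := H1 u ltac:(lra)).
          assert (Hxn : x u < nn * - y u) by (apply (Rmult_lt_reg_r (/ nn)); [apply Rinv_0_lt_compat; lra|];
            replace (nn * - y u * / nn) with (- y u) by (field; lra); unfold Rdiv in Hw; lra).
          assert (Hy2 : 0 < (y u)^2) by (simpl; nra).
          assert (Hnum : - Cc * (y u)^2 <= - x u - (nn - 2) * y u - m * y u ^ 2 - kk * x u * y u).
          { assert (0 <= kk * x u * - y u) by (apply Rmult_le_pos; nra).
            assert (nn * - y u <= nn * (y u)^2) by (simpl; nra).
            unfold Cc. simpl. nra. }
          assert (- Cc <= (- x u - (nn - 2) * y u - m * y u ^ 2 - kk * x u * y u) / (y u)^2).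
          { apply (Rmult_le_reg_r ((y u)^2)); auto. unfold Rdiv. rewrite Rmult_assoc, Rinv_l, Rmult_1_r by lra. lra. }
          lra. }
      assert (Cc * s' <= Cc * b) by (apply Rmult_le_compat_l; lra). lra. }
    set (g := (1 - kk * nn) / Cc). assert (Hg : 0 < g) by (unfold g; apply Rdiv_lt_0_compat; lra).
    set (t3 := (s1 + b) / 2).
    set (Psi := fun u => ln (- (y u / x u)) + g * ln (b - u) + nn * u).
    assert (HPsi : forall t, t3 <= t < b -> Psi t3 <= Psi t).
    { intros t Ht.
      apply (incr_weak Psi (fun u => - x u / y u - y u - kk * x u - g / (b - u))); [lra| |].
      - intros u Hu. assert (Hud : Rbar_lt u T) by (apply HD; lra).
        assert (Dx := dx u Hud). assert (Dy := dy u Hud). assert (Hy := y_neg u Hud). assert (Hx := xpos u Hud).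
        assert (HY : 0 < - (y u / x u)) by (unfold Rdiv; assert (0 < / x u) by (apply Rinv_0_lt_compat; auto); nra).
        unfold Psi. auto_derive. solve_exd. rw_der Dx. rw_der Dy. field. repeat split; lra.
      - intros u Hu. assert (Hud : Rbar_lt u T) by (apply HD; lra).
        assert (Hy := y_neg u Hud). assert (Hx := xpos u Hud). assert (Hw := w_neg Hd u Hud).
        assert (Hxn : x u < nn * - y u) by (apply (Rmult_lt_reg_r (/ nn)); [apply Rinv_0_lt_compat; lra|];
            replace (nn * - y u * / nn) with (- y u) by (field; lra); unfold Rdiv in Hw; lra).
        assert (HBu := HB u ltac:(unfold t3 in *; lra)).
        assert (Hbu : 0 < b - u) by lra.
        assert (Hyu : / (Cc * (b - u)) <= - y u).
        { rewrite <- (Rinv_inv (- y u)). apply Rinv_le_contravar; auto.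
          apply Rinv_0_lt_compat; lra. }
        assert (Hgb : g / (b - u) = (1 - kk * nn) * / (Cc * (b - u))) by (unfold g; field; lra).
        assert ((1 - kk * nn) * / (Cc * (b - u)) <= (1 - kk * nn) * - y u) by (apply Rmult_le_compat_l; lra).
        assert (kk * x u <= kk * (nn * - y u)) by (apply Rmult_le_compat_l; lra).
        assert (0 < - x u / y u) by (replace (- x u / y u) with (x u / - y u) by (field; lra); apply Rdiv_lt_0_compat; lra).
        lra. }
    intro K. set (K' := Rmax 1 (- K)).
    assert (HK1 : 1 <= K') by apply Rmax_l. assert (HK2 : - K <= K') by apply Rmax_r.
    set (A := ln K' - Psi t3 + nn * Rabs b).
    set (d := exp (- A / g)). assert (Hd0 : 0 < d) by apply exp_pos.
    exists (Rmax t3 (b - d)). split.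
    { unfold Rmax; destruct Rle_dec; unfold t3; lra. }
    intros t Ht. assert (A1 := Rmax_l t3 (b - d)). assert (A2 := Rmax_r t3 (b - d)).
    assert (Htd : Rbar_lt t T) by (apply HD; lra).
    assert (Hy := y_neg t Htd). assert (Hx := xpos t Htd).
    assert (HY : 0 < - (y t / x t)) by (unfold Rdiv; assert (0 < / x t) by (apply Rinv_0_lt_compat; auto); nra).
    specialize (HPsi t ltac:(lra)). unfold Psi in HPsi.
    assert (HPt3 : Psi t3 = ln (- (y t3 / x t3)) + g * ln (b - t3) + nn * t3) by reflexivity.
    assert (Hln : ln (b - t) < - A / g).
    { rewrite <- (ln_exp (- A / g)). apply ln_increasing; fold d; lra. }
    assert (Hb1 : t <= Rabs b) by (assert (b <= Rabs b) by apply Rle_abs; lra).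
    assert (g * ln (b - t) < g * (- A / g)) by (apply Rmult_lt_compat_l; auto).
    replace (g * (- A / g)) with (- A) in H by (field; lra).
    assert (Hmain : ln K' < ln (- (y t / x t))).
    { unfold A in H. rewrite <- HPt3 in HPsi. nra. }
    assert (K' < - (y t / x t)).
    { destruct (Rle_or_lt (- (y t / x t)) K') as [Hc|Hc]; auto.
      destruct (Req_dec (- (y t / x t)) K') as [Hc2|Hc2]; [rewrite Hc2 in Hmain; lra|].
      assert (ln (- (y t / x t)) < ln K') by (apply ln_increasing; lra). lra. }
    unfold Y1. lra.
  - apply fl_left. intros eps He.
    destruct (HU (/ eps) ltac:(apply Rinv_0_lt_compat; lra)) as [s [Hs Hs2]].
    exists s. split; auto. intros t Ht. assert (Htd : Rbar_lt t T) by (apply HD; lra).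
    assert (Hy := y_neg t Htd). assert (Hx := xpos t Htd). specialize (Hs2 t Ht).
    unfold X1, Y1. replace (/ x t / (y t / x t) - 0) with (/ y t) by (field; lra).
    rewrite Rabs_Rinv by lra. rewrite Rabs_left by lra.
    apply (Rmult_lt_reg_r (- y t)); [lra|]. rewrite Rinv_l by lra.
    apply (Rmult_lt_compat_l eps) in Hs2; [|lra]. rewrite Rinv_r in Hs2 by lra. lra.
Qed.


Lemma x_incr (s t : R) : Rbar_lt t T -> s <= t -> x s <= x t.
Proof.
  intros Ht Hst. apply (incr_weak x (fun u => x u * (2 - (m - 1) * y u))); auto.
  - intros u Hu. apply dx. apply (D_down T t); auto; lra.
  - intros u Hu. assert (Hud : Rbar_lt u T) by (apply (D_down T t); auto; lra).
    assert (Hx := xpos u Hud). assert (Hy := y_neg u Hud). assert (0 < 2 - (m - 1) * y u) by nra. nra.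
Qed.

Lemma b_inf : kk = / nn -> T = p_infty -> False.
Proof.
  intros Hd HT. assert (Hn := nn_ge3).
  assert (HD : forall u : R, Rbar_lt u T) by (intros; rewrite HT; simpl; auto).
  assert (Hyx : forall u, y u = - x u / nn) by (intro u; assert (H := w_zero Hd u (HD u)); field_simplify; lra).
  set (x0 := x 0). assert (Hx0 : 0 < x0) by (apply xpos; auto).
  set (Psi := fun u => / x u + ((m - 1) / nn) * u).
  assert (HPsi : forall t, 0 <= t -> Psi t <= Psi 0).
  { intros t Ht. apply (decr_weak Psi (fun u => - 2 / x u)); auto.
    - intros u Hu. assert (Dx := dx u (HD u)). assert (Hx := xpos u (HD u)).
      apply (is_derive_eq _ _ (- (x u * (2 - (m - 1) * y u)) / (x u)^2 + (m - 1) / nn)).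
      + unfold Psi. auto_derive. solve_exd. rw_der Dx. field. lra.
      + rewrite (Hyx u). field. lra.
    - intros u Hu. assert (Hx := xpos u (HD u)). assert (0 < / x u) by (apply Rinv_0_lt_compat; auto).
      unfold Rdiv. lra. }
  set (t := nn / (m - 1) * / x0 + 1).
  assert (Ht : 0 <= t) by (unfold t; assert (0 < nn / (m - 1) * / x0) by (apply Rmult_lt_0_compat; [apply Rdiv_lt_0_compat|apply Rinv_0_lt_compat]; lra); lra).
  specialize (HPsi t Ht). unfold Psi in HPsi. rewrite Rmult_0_r, Rplus_0_r in HPsi.
  assert (Hxt := xpos t (HD t)). assert (0 < / x t) by (apply Rinv_0_lt_compat; auto).
  assert ((m - 1) / nn * t = / x0 + (m - 1) / nn) by (unfold t; field; lra).
  fold x0 in HPsi.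
  assert (0 < (m - 1) / nn) by (apply Rdiv_lt_0_compat; lra). lra.
Qed.

Lemma b_fin_U : kk = / nn -> forall b, T = Finite b ->
  forall K, 0 < K -> exists s, s < b /\ forall t, s < t < b -> K < x t.
Proof.
  intros Hd b HT K HK. assert (Hn := nn_ge3).
  assert (HD : forall u, u < b -> Rbar_lt u T) by (intros; rewrite HT; simpl; auto).
  destruct (classic (exists s, b - 1 < s < b /\ K < x s)) as [[s [Hs HKs]]|Hno].
  - exists s. split; [lra|]. intros t Ht. assert (x s <= x t) by (apply x_incr; [apply HD|]; lra). lra.
  - exfalso.
    apply (no_bounded_end nn m sigma p b K (b - 1) x y z).
    + rewrite <- HT. exact Hsol.
    + rewrite <- HT. exact Hmax.
    + intros t Ht. apply Hzx. apply HD; auto.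
    + lra.
    + intros t Ht. assert (Htd : Rbar_lt t T) by (apply HD; lra).
      assert (Hx := xpos t Htd). assert (Hy := y_neg t Htd).
      assert (Hxk : x t <= K) by (destruct (Rle_or_lt (x t) K); auto; exfalso; apply Hno; exists t; auto).
      assert (H := w_zero Hd t Htd).
      assert (x t / nn <= x t) by (unfold Rdiv; assert (/ nn < 1) by (rewrite <- Rinv_1; apply Rinv_lt_contravar; lra);
        assert (0 < / nn) by (apply Rinv_0_lt_compat; lra); nra).
      rewrite (Rabs_right (x t)) by lra. rewrite (Rabs_left (y t)) by lra. split; lra.
Qed.


Lemma Tcases : T = p_infty \/ exists b, T = Finite b.
Proof.
  assert (HT := T_not_minf).
  assert (G : forall T' : Rbar, T' <> m_infty -> T' = p_infty \/ exists b, T' = Finite b).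
  { intros T' H. destruct T' as [b| |]; eauto. exfalso; auto. }
  apply G; auto.
Qed.

Lemma kk_rel : kk - / nn = ((p - m) - (sigma + 2) / nn) / (sigma + 2).
Proof. assert (Hn := nn_ge3). unfold kk. field. lra. Qed.

Lemma Z1_zero (t : R) : Rbar_lt t T -> Z1 x z t = 0.
Proof. intro Ht. unfold Z1. destruct (Hzx t Ht) as [Hz _]. rewrite Hz. unfold Rdiv. ring. Qed.

Lemma main_all :
  (p < pF (INR N) m sigma ->
     filterlim (Y1 x y) (end_filter T) (Rbar_locally m_infty) /\
     filterlim (fun t => X1 x t / Y1 x y t) (end_filter T) (locally 0) /\
     (forall t : R, Rbar_lt t T -> Z1 x z t = 0)) /\
  (p = pF (INR N) m sigma ->
     (forall t : R, Rbar_lt t T -> y t = - x t / INR N /\ z t = 0 /\ 0 < x t) /\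
     (forall s : R, 0 < s -> exists t : R, Rbar_lt t T /\ x t = s) /\
     filterlim (X1 x) (end_filter T) (locally 0) /\
     filterlim (Y1 x y) (end_filter T) (locally (- ((p - m) / (sigma + 2)))) /\
     filterlim (Z1 x z) (end_filter T) (locally 0)) /\
  (pF (INR N) m sigma < p ->
     filterlim (X1 x) (end_filter T) (locally 0) /\
     filterlim (Y1 x y) (end_filter T) (locally 0) /\
     filterlim (Z1 x z) (end_filter T) (locally 0)).
Proof.
  assert (Hn := nn_ge3). assert (Hs2 : 0 < sigma + 2) by lra.
  assert (HpF : pF (INR N) m sigma = m + (sigma + 2) / nn) by reflexivity.
  assert (Hrel := kk_rel).
  assert (Hkd : (kk - / nn) * (sigma + 2) = (p - m) - (sigma + 2) / nn) by (unfold kk; field; lra).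
  split; [|split].
  - intro Hlt. assert (Hd : kk - / nn < 0) by (rewrite HpF in Hlt; nra).
    destruct Tcases as [HT | [b HT]].
    + exfalso. apply (a_inf Hd HT).
    + destruct (a_fin Hd b HT) as [A1 A2]. rewrite HT. simpl. split; auto. split; auto.
      intros t Ht. apply Z1_zero. rewrite HT. exact Ht.
  - intro Heq. assert (Hd : kk = / nn) by (rewrite HpF in Heq; nra).
    destruct Tcases as [HT | [b HT]].
    + exfalso. apply (b_inf Hd HT).
    + assert (HD : forall u, u < b -> Rbar_lt u T) by (intros; rewrite HT; simpl; auto).
      assert (HU := b_fin_U Hd b HT).
      assert (P1 : forall t : R, Rbar_lt t T -> y t = - x t / INR N /\ z t = 0 /\ 0 < x t).
      { intros t Ht. destruct (Hzx t Ht) as [Hz Hx]. split; auto.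
        assert (H := w_zero Hd t Ht). unfold nn in H. assert (E : - x t / INR N = - (x t / INR N)) by (unfold Rdiv; ring). rewrite E. lra. }
      split; [exact P1|]. split.
      { intros s0 Hs0.
        destruct exists_D as [tD HtD].
        destruct (lim_eps0 x Hlx s0 Hs0) as [M HM].
        set (ta := Rmin M tD - 1).
        assert (A1 := Rmin_l M tD). assert (A2 := Rmin_r M tD).
        assert (Hta : Rbar_lt ta T) by (apply (D_down T tD); auto; unfold ta; lra).
        assert (Hxa : x ta < s0) by (specialize (HM ta ltac:(unfold ta; lra)); unfold Rabs in HM; destruct Rcase_abs in HM; lra).
        destruct (HU s0 Hs0) as [s1 [Hs1 Hs1']].
        set (tc := (Rmax s1 ta + b) / 2).
        assert (A3 := Rmax_l s1 ta). assert (A4 := Rmax_r s1 ta).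
        assert (Htab : ta < b) by (rewrite HT in Hta; exact Hta).
        assert (Hmb : Rmax s1 ta < b) by (unfold Rmax; destruct Rle_dec; lra).
        assert (Htc : s1 < tc < b) by (unfold tc; lra).
        assert (Hxc := Hs1' tc Htc).
        assert (Hac : ta < tc) by (unfold tc; lra).
        destruct (Ranalysis5.IVT_interv (fun u => x u - s0) ta tc) as [t0 [Ht0 Ht0']]; auto.
        - intros a Ha. assert (Had : Rbar_lt a T) by (apply HD; lra).
          assert (Hc : continuity_pt x a) by (apply continuity_pt_filterlim; apply cont_x; auto).
          exact (continuity_pt_minus x (fun _ => s0) a Hc (continuity_pt_const (fun _ : R => s0) a (fun _ _ => eq_refl))).
        - lra.
        - lra.
        - exists t0. split; [apply HD; lra| lra]. }
      rewrite HT. simpl. split; [|split].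
      * apply fl_left. intros eps He. destruct (HU (/ eps) ltac:(apply Rinv_0_lt_compat; lra)) as [s1 [Hs1 Hs1']].
        exists s1. split; auto. intros t Ht. specialize (Hs1' t Ht).
        assert (0 < / eps) by (apply Rinv_0_lt_compat; lra). assert (Hx : 0 < x t) by lra.
        unfold X1. rewrite Rminus_0_r. rewrite Rabs_right by (apply Rle_ge, Rlt_le, Rinv_0_lt_compat; auto).
        apply (Rmult_lt_reg_r (x t)); auto. rewrite Rinv_l by lra.
        apply (Rmult_lt_compat_l eps) in Hs1'; [|lra]. rewrite Rinv_r in Hs1' by lra. lra.
      * apply fl_left. intros eps He. exists (b - 1). split; [lra|]. intros t Ht.
        assert (Htd : Rbar_lt t T) by (apply HD; lra). destruct (P1 t Htd) as [Hy [_ Hx]].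
        unfold Y1. rewrite Hy. fold kk. rewrite Hd. unfold nn.
        assert (3 <= INR N) by exact Hn. replace (- x t / INR N / x t - - / INR N) with 0 by (field; split; lra).
        rewrite Rabs_R0. auto.
      * apply fl_left. intros eps He. exists (b - 1). split; [lra|]. intros t Ht.
        rewrite Z1_zero by (apply HD; lra). rewrite Rminus_0_r, Rabs_R0. auto.
  - intro Hgt. assert (Hd : 0 < kk - / nn) by (rewrite HpF in Hgt; nra).
    destruct Tcases as [HT | [b HT]].
    + rewrite HT. simpl. apply c_inf; auto.
    + exfalso. apply (c_fin Hd b HT).
Qed.

End Main.


Theorem lemma3p3 (N : nat) (m sigma p : R) (T : Rbar) (x y z : R -> R) :
  (3 <= N)%nat -> 1 < m -> 0 < sigma -> m < p ->
  (* (x,y,z) is a maximal solution of (S2) on (-oo,T) *)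
  S2_sol (INR N) m sigma p T x y z ->
  S2_maximal (INR N) m sigma p T x y z ->
  (* it is the trajectory l0: in the plane {z=0}, with x>0, on the unstable
     manifold of Q1 = (0,0,0), leaving Q1 tangent to (N,-1,0) *)
  (forall t : R, Rbar_lt t T -> z t = 0 /\ 0 < x t) ->
  is_lim x m_infty 0 -> is_lim y m_infty 0 ->
  is_lim (fun t => y t / x t) m_infty (- / INR N) ->
  (* (a) *)
  (p < pF (INR N) m sigma ->
     filterlim (Y1 x y) (end_filter T) (Rbar_locally m_infty) /\
     filterlim (fun t => X1 x t / Y1 x y t) (end_filter T) (locally 0) /\
     (forall t : R, Rbar_lt t T -> Z1 x z t = 0)) /\
  (* (b) *)
  (p = pF (INR N) m sigma ->
     (forall t : R, Rbar_lt t T -> y t = - x t / INR N /\ z t = 0 /\ 0 < x t) /\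
     (forall s : R, 0 < s -> exists t : R, Rbar_lt t T /\ x t = s) /\
     filterlim (X1 x) (end_filter T) (locally 0) /\
     filterlim (Y1 x y) (end_filter T) (locally (- ((p - m) / (sigma + 2)))) /\
     filterlim (Z1 x z) (end_filter T) (locally 0)) /\
  (* (c) *)
  (pF (INR N) m sigma < p ->
     filterlim (X1 x) (end_filter T) (locally 0) /\
     filterlim (Y1 x y) (end_filter T) (locally 0) /\
     filterlim (Z1 x z) (end_filter T) (locally 0)).
Proof.
  intros HN Hm Hs Hp Hsol Hmax Hzx Hlx Hly Hlyx.
  apply (main_all N m sigma p T x y z); assumption.
Qed.
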